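(* The terminal value problem $$\partial_tv(t,q)+v(t,q)C^S(q)-v(t,q)\,C\sum_{j\in\{a,b\}}\Big(\frac{v(t,q)}{\sum_{i\in\mathcal G}v(t,q\ominus_i\phi(j))\mathbf 1_{\{\phi(j)q^i>-\bar q\}}}\Big)^{\frac{k\varpi}{\sigma\eta}}=0,\quad (t,q)\in[0,T)\times\mathcal Q^N,\qquad v(T,q)=-1,\ q\in\mathcal Q^N,$$ (a system of $(2\bar q+1)^N$ ordinary differential equations) admits a unique bounded solution $v:[0,T]\times\mathcal Q^N\to\mathbb R$, and this solution is negative.
   Context: Fix integers $N\ge1$, $\bar q\in\mathbb N$, reals $T,A,k,\sigma,c,\varpi,\eta>0$, $\gamma_1,\dots,\gamma_N>0$. $\mathcal Q:=\{-\bar q,\dots,\bar q\}$; $\phi(a)=1$, $\phi(b)=-1$; $q\ominus_ix$ is $q$ with $i$-th coordinate $q^i-x$ (so $q\ominus_i(-1)$ adds one to $q^i$); $\mathcal G:=\{i:\gamma_i=\max_m\gamma_m\}$. A term in the sum over $j$ whose denominator is an empty sum (all indicators zero) is interpreted as $0$. $\mu_{i,j}:=-\eta\kappa\prod_{m\notin\{i,j\}}\gamma_m$ ($i\ne j$), $\mu_{i,i}:=\kappa(\prod_{j\ne i}\gamma_j+\eta\sum_{j\ne i}\prod_{m\notin\{i,j\}}\gamma_m)$, $\kappa^{-1}:=\prod_i\gamma_i+\eta\sum_j\prod_{m\ne j}\gamma_m$. $C^S(q):=\sum_{i=1}^N\frac\eta2\sigma^2\gamma_i\big(q^i-\sum_{j}\mu_{i,j}\gamma_jq^j\big)^2+\frac{\eta^2\sigma^2}2\big(\sum_i\sum_j\mu_{i,j}\gamma_jq^j\big)^2$.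 $C:=A\exp\big(-\frac k\sigma\big(c(1-\varpi)-\frac\varpi\eta\log\big(\frac{k\varpi}{k\varpi+\eta\sigma}\mathrm{Card}(\mathcal G)(1+\eta\sigma\sum_i\frac1{k\varpi+\sigma\gamma_i})\big)+\varpi\sum_i\gamma_i^{-1}\log(1+\frac{\sigma\gamma_i}{k\varpi})\big)\big)\cdot\frac{\sigma\eta}{k\varpi+\sigma\eta}\big(1+\eta\sigma\sum_i\frac1{k\varpi+\sigma\gamma_i}\big)$. *)

(* Defs.v *)
From Stdlib Require Import Reals Lra Lia ZArith List.
Import ListNotations.
Open Scope R_scope.

Definition Rsum (l : list nat) (f : nat -> R) : R :=
  fold_right (fun i acc => f i + acc) 0 l.
Definition Rprod (l : list nat) (f : nat -> R) : R :=
  fold_right (fun i acc => f i * acc) 1 l.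

Definition idx (N : nat) : list nat := seq 0 N.
Definition idx_ne1 (N i : nat) : list nat :=
  filter (fun m => negb (Nat.eqb m i)) (idx N).
Definition idx_ne2 (N i j : nat) : list nat :=
  filter (fun m => andb (negb (Nat.eqb m i)) (negb (Nat.eqb m j))) (idx N).

Definition kappa (N : nat) (eta : R) (gamma : nat -> R) : R :=
  / (Rprod (idx N) gamma
     + eta * Rsum (idx N) (fun j => Rprod (idx_ne1 N j) gamma)).

Definition mu (N : nat) (eta : R) (gamma : nat -> R) (i j : nat) : R :=
  if Nat.eqb i j then
    kappa N eta gamma *
      (Rprod (idx_ne1 N i) gamma
       + eta * Rsum (idx_ne1 N i) (fun j' => Rprod (idx_ne2 N i j') gamma))
  else - eta * kappa N eta gamma * Rprod (idx_ne2 N i j) gamma.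

(* Inventory vectors q in Z^N are lists of length N; q^i = nth i q 0. *)
Definition coord (q : list Z) (i : nat) : Z := nth i q 0%Z.

Fixpoint list_upd (q : list Z) (i : nat) (x : Z) : list Z :=
  match q, i with
  | [], _ => []
  | _ :: t, O => x :: t
  | h :: t, S i' => h :: list_upd t i' x
  end.

Definition qminus (q : list Z) (i : nat) (x : Z) : list Z :=
  list_upd q i (coord q i - x)%Z.

Definition inQN (N qbar : nat) (q : list Z) : Prop :=
  length q = N /\
  forall i, (i < N)%nat -> (- Z.of_nat qbar <= coord q i <= Z.of_nat qbar)%Z.

Definition CS (N : nat) (sigma eta : R) (gamma : nat -> R) (q : list Z) : R :=
  let Mq i := Rsum (idx N) (fun j => mu N eta gamma i j * gamma j * IZR (coord q j)) in
  Rsum (idx N) (fun i => eta / 2 * sigma ^ 2 * gamma i * (IZR (coord q i) - Mq i) ^ 2)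
  + eta ^ 2 * sigma ^ 2 / 2 * (Rsum (idx N) Mq) ^ 2.

Definition gmax (N : nat) (gamma : nat -> R) : R :=
  fold_right (fun i acc => Rmax (gamma i) acc) (gamma 0%nat) (idx N).

Definition is_max (N : nat) (gamma : nat -> R) (i : nat) : bool :=
  if Req_EM_T (gamma i) (gmax N gamma) then true else false.

Definition Gset (N : nat) (gamma : nat -> R) : list nat :=
  filter (is_max N gamma) (idx N).

Definition Cconst (N : nat) (A k sigma c varpi eta : R) (gamma : nat -> R) : R :=
  let S := 1 + eta * sigma * Rsum (idx N) (fun i => / (k * varpi + sigma * gamma i)) in
  A * exp (- (k / sigma) *
      (c * (1 - varpi)
       - varpi / eta * ln (k * varpi / (k * varpi + eta * sigma)
                           * INR (length (Gset N gamma)) * S)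
       + varpi * Rsum (idx N) (fun i => / gamma i * ln (1 + sigma * gamma i / (k * varpi)))))
  * (sigma * eta / (k * varpi + sigma * eta)) * S.

Definition act_idx (N qbar : nat) (gamma : nat -> R) (phi : Z) (q : list Z) : list nat :=
  filter (fun i => Z.ltb (- Z.of_nat qbar) (phi * coord q i)) (Gset N gamma).

Definition denom (N qbar : nat) (gamma : nat -> R) (v : R -> list Z -> R)
  (t : R) (phi : Z) (q : list Z) : R :=
  Rsum (act_idx N qbar gamma phi q) (fun i => v t (qminus q i phi)).

(* the j-term of the sum; 0 when the denominator is an empty sum *)
Definition jterm (N qbar : nat) (k sigma varpi eta : R) (gamma : nat -> R)
  (v : R -> list Z -> R) (t : R) (phi : Z) (q : list Z) : R :=
  match act_idx N qbar gamma phi q with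
  | [] => 0
  | _ => Rpower (v t q / denom N qbar gamma v t phi q) (k * varpi / (sigma * eta))
  end.

(* well-definedness of the real power: the base is positive whenever the
   denominator is a nonempty sum *)
Definition jterm_welldef (N qbar : nat) (gamma : nat -> R)
  (v : R -> list Z -> R) (t : R) (phi : Z) (q : list Z) : Prop :=
  act_idx N qbar gamma phi q <> [] ->
  denom N qbar gamma v t phi q <> 0 /\ 0 < v t q / denom N qbar gamma v t phi q.

(* derivative of f at t within the interval [a, b] (one-sided at endpoints) *)
Definition deriv_within (f : R -> R) (a b t l : R) : Prop :=
  forall eps, 0 < eps -> exists delta, 0 < delta /\
    forall s, a <= s <= b -> s <> t -> Rabs (s - t) < delta ->
      Rabs ((f s - f t) / (s - t) - l) < eps.

Definition cont_within (f : R -> R) (a b t : R) : Prop :=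
  forall eps, 0 < eps -> exists delta, 0 < delta /\
    forall s, a <= s <= b -> Rabs (s - t) < delta -> Rabs (f s - f t) < eps.

Definition is_solution (N qbar : nat) (T A k sigma c varpi eta : R)
  (gamma : nat -> R) (v : R -> list Z -> R) : Prop :=
  forall q, inQN N qbar q ->
    (exists dv : R -> R,
       forall t, 0 <= t < T ->
         deriv_within (fun s => v s q) 0 T t (dv t) /\
         jterm_welldef N qbar gamma v t 1%Z q /\
         jterm_welldef N qbar gamma v t (-1)%Z q /\
         dv t + v t q * CS N sigma eta gamma q
         - v t q * Cconst N A k sigma c varpi eta gamma *
             (jterm N qbar k sigma varpi eta gamma v t 1%Z q
              + jterm N qbar k sigma varpi eta gamma v t (-1)%Z q) = 0)
    /\ cont_within (fun s => v s q) 0 T T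
    /\ v T q = -1.

Definition bounded_on (N qbar : nat) (T : R) (v : R -> list Z -> R) : Prop :=
  exists M, forall t q, 0 <= t <= T -> inQN N qbar q -> Rabs (v t q) <= M.

(* Main.v *)
Require Import Defs.
From Stdlib Require Import Reals Lra Lia ZArith List.
Import ListNotations.
From Coquelicot Require Import Coquelicot.
Open Scope R_scope.

Definition cl (a b x : R) : R := Rmax a (Rmin b x).

Lemma cl_in a b x : a <= b -> a <= cl a b x <= b.
Proof. intros; unfold cl, Rmax, Rmin; repeat destruct Rle_dec; lra. Qed.

Lemma cl_id a b x : a <= x <= b -> cl a b x = x.
Proof. intros; unfold cl, Rmax, Rmin; repeat destruct Rle_dec; lra. Qed.

Lemma cl_lip a b x y : a <= b -> Rabs (cl a b x - cl a b y) <= Rabs (x - y).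
Proof.
  intros; unfold cl, Rmax, Rmin, Rabs; repeat destruct Rle_dec; repeat destruct Rcase_abs; lra.
Qed.

Lemma Rabs_lt_helper x l : Rabs (x - l) < 1 -> Rabs x < Rabs l + 1.
Proof. intros. unfold Rabs in *; repeat destruct Rcase_abs; lra. Qed.

Lemma deriv_cont f a b t l : deriv_within f a b t l -> cont_within f a b t.
Proof.
  intros Hd eps Heps. destruct (Hd 1 Rlt_0_1) as [d1 [Hd1 H1]].
  assert (HM : 0 < Rabs l + 1) by (pose proof (Rabs_pos l); lra).
  exists (Rmin d1 (eps / (Rabs l + 1))). split.
  { apply Rmin_pos; [lra| apply Rdiv_lt_0_compat; lra]. }
  intros s Hs Hst. destruct (Req_dec s t) as [->|Hne].
  { rewrite Rminus_diag, Rabs_R0; lra. }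
  assert (Hq := H1 s Hs Hne (Rlt_le_trans _ _ _ Hst (Rmin_l _ _))).
  apply Rabs_lt_helper in Hq.
  assert (Hst2 : Rabs (s - t) < eps / (Rabs l + 1)) by
    (apply Rlt_le_trans with (1 := Hst); apply Rmin_r).
  replace (f s - f t) with ((f s - f t)/(s-t) * (s - t)) by (field; lra).
  rewrite Rabs_mult.
  apply Rle_lt_trans with ((Rabs l + 1) * Rabs (s-t)).
  { apply Rmult_le_compat_r; [apply Rabs_pos| lra]. }
  apply Rlt_le_trans with ((Rabs l + 1) * (eps / (Rabs l + 1))).
  { apply Rmult_lt_compat_l; lra. }
  right; field; lra.
Qed.

Lemma cont_ext f a b : a <= b -> (forall x, a <= x <= b -> cont_within f a b x) ->
  forall y, continuity_pt (fun x => f (cl a b x)) y.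
Proof.
  intros Hab Hc y eps Heps.
  destruct (Hc (cl a b y) (cl_in a b y Hab) eps Heps) as [d [Hd H]].
  exists d; split; [exact Hd|]. intros x [_ Hx]. simpl in *. unfold R_dist in *.
  apply H. apply cl_in; auto. eapply Rle_lt_trans. apply cl_lip; auto. exact Hx.
Qed.

Lemma deriv_interior f a b t l : deriv_within f a b t l -> a < t < b -> is_derive f t l.
Proof.
  intros Hd Ht. apply is_derive_Reals. intros eps Heps.
  destruct (Hd eps Heps) as [d [Hd0 H]].
  assert (Hp : 0 < Rmin d (Rmin (t - a) (b - t))) by
    (repeat apply Rmin_pos; lra).
  exists (mkposreal _ Hp). intros h Hh Hha. simpl in Hha.
  pose proof (Rmin_l d (Rmin (t-a) (b-t))). pose proof (Rmin_r d (Rmin (t-a) (b-t))).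
  pose proof (Rmin_l (t-a) (b-t)). pose proof (Rmin_r (t-a) (b-t)).
  assert (Hb : Rabs h < t - a /\ Rabs h < b - t) by lra.
  replace ((f (t + h) - f t) / h) with ((f (t+h) - f t) / ((t+h) - t)) by (f_equal; ring).
  apply H.
  - unfold Rabs in Hb; destruct Rcase_abs; lra.
  - intro E; apply Hh; lra.
  - replace (t + h - t) with h by ring; lra.
Qed.

Lemma derive_within f a b t l : is_derive f t l -> deriv_within f a b t l.
Proof.
  intros Hd. apply is_derive_Reals in Hd. intros eps Heps.
  destruct (Hd eps Heps) as [d H]. exists d. split; [apply cond_pos|].
  intros s _ Hs Hst.
  replace s with (t + (s - t)) at 1 by ring.
  apply H; auto. lra.
Qed.

Lemma cont_within_sub f a b a' b' t : a <= a' -> b' <= b -> cont_within f a b t -> cont_within f a' b' t.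
Proof.
  intros H1 H2 Hc eps Heps. destruct (Hc eps Heps) as [d [Hd H]]. exists d; split; auto.
  intros s Hs Hst. apply H; auto; lra.
Qed.

Lemma is_derive_cont_within f a b t l : is_derive f t l -> cont_within f a b t.
Proof. intros; eapply deriv_cont, derive_within; eauto. Qed.

Lemma mono_le g dg a b : a <= b ->
  (forall x, a < x < b -> is_derive g x (dg x) /\ dg x <= 0) ->
  cont_within g a b a -> cont_within g a b b -> g b <= g a.
Proof.
  intros Hab Hd Ha Hb.
  assert (Hc : forall x, a <= x <= b -> cont_within g a b x).
  { intros x Hx. destruct (Req_dec x a) as [->|]; auto. destruct (Req_dec x b) as [->|]; auto.
    apply is_derive_cont_within with (dg x). apply Hd; lra. }
  pose (df := fun x => if Rlt_dec a x then if Rlt_dec x b then dg x else 0 else 0).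
  destruct (MVT_gen (fun x => g (cl a b x)) a b df) as [c [Hc1 Hc2]].
  - intros x Hx. rewrite Rmin_left in Hx by lra. rewrite Rmax_right in Hx by lra.
    unfold df; destruct Rlt_dec; [|lra]; destruct Rlt_dec; [|lra].
    apply is_derive_ext_loc with g.
    + assert (Hp : 0 < Rmin (x - a) (b - x)) by (apply Rmin_pos; lra).
      exists (mkposreal _ Hp). intros y Hy. simpl in Hy. unfold ball in Hy; simpl in Hy.
      unfold AbsRing_ball, abs, minus, plus, opp in Hy; simpl in Hy.
      pose proof (Rmin_l (x-a) (b-x)). pose proof (Rmin_r (x-a) (b-x)).
      rewrite cl_id; auto. unfold Rabs in Hy; destruct Rcase_abs; lra.
    + apply Hd; lra.
  - intros x _. apply cont_ext; auto.
  - rewrite !cl_id in Hc2 by lra.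
    rewrite Rmin_left in Hc1 by lra. rewrite Rmax_right in Hc1 by lra.
    assert (df c <= 0).
    { unfold df; destruct Rlt_dec; [destruct Rlt_dec|]; try lra. apply Hd; lra. }
    nra.
Qed.

Lemma mono_ge g dg a b : a <= b ->
  (forall x, a < x < b -> is_derive g x (dg x) /\ 0 <= dg x) ->
  cont_within g a b a -> cont_within g a b b -> g a <= g b.
Proof.
  intros Hab Hd Ha Hb.
  assert (H := mono_le (fun x => - g x) (fun x => - dg x) a b Hab).
  cut (- g b <= - g a). lra. apply H.
  - intros x Hx. destruct (Hd x Hx). split; [|lra]. apply (is_derive_opp g x (dg x)). auto.
  - intros eps He; destruct (Ha eps He) as [d [? Hd']]; exists d; split; auto; intros;
      rewrite <- Rabs_Ropp; replace (- (- g s - - g a)) with (g s - g a) by ring; auto.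
  - intros eps He; destruct (Hb eps He) as [d [? Hd']]; exists d; split; auto; intros;
      rewrite <- Rabs_Ropp; replace (- (- g s - - g b)) with (g s - g b) by ring; auto.
Qed.

Definition dw (f : R -> R) a b t l : Prop :=
  forall eps, 0 < eps -> exists delta, 0 < delta /\
    forall s, a <= s <= b -> Rabs (s - t) < delta ->
      Rabs (f s - f t - l * (s - t)) <= eps * Rabs (s - t).

Lemma dw_of f a b t l : deriv_within f a b t l -> dw f a b t l.
Proof.
  intros Hd eps Heps. destruct (Hd eps Heps) as [d [Hd0 H]]. exists d; split; auto.
  intros s Hs Hst. destruct (Req_dec s t) as [->|Hne].
  { replace (f t - f t - l * (t - t)) with 0 by ring. rewrite Rabs_R0. apply Rmult_le_pos; [lra|apply Rabs_pos]. }
  specialize (H s Hs Hne Hst).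
  replace (f s - f t - l * (s - t)) with (((f s - f t)/(s-t) - l) * (s - t)) by (field; lra).
  rewrite Rabs_mult. apply Rmult_le_compat_r; [apply Rabs_pos|lra].
Qed.

Lemma of_dw f a b t l : dw f a b t l -> deriv_within f a b t l.
Proof.
  intros Hd eps Heps. destruct (Hd (eps/2)) as [d [Hd0 H]]; [lra|]. exists d; split; auto.
  intros s Hs Hne Hst. specialize (H s Hs Hst).
  assert (Hp : 0 < Rabs (s - t)) by (apply Rabs_pos_lt; lra).
  replace ((f s - f t)/(s-t) - l) with ((f s - f t - l * (s - t)) / (s - t)) by (field; lra).
  unfold Rdiv; rewrite Rabs_mult, Rabs_inv.
  apply Rle_lt_trans with (eps / 2 * Rabs (s - t) * / Rabs (s - t)).
  { apply Rmult_le_compat_r; [left; apply Rinv_0_lt_compat; auto| auto]. }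
  field_simplify; lra.
Qed.

Lemma dpl_alt (g : R -> R) y m : derivable_pt_lim g y m ->
  forall e, 0 < e -> exists d, 0 < d /\ forall h, Rabs h < d -> Rabs (g (y + h) - g y - m * h) <= e * Rabs h.
Proof.
  intros Hd e He. destruct (Hd e He) as [d H]. exists d; split; [apply cond_pos|].
  intros h Hh. destruct (Req_dec h 0) as [->|Hne].
  { rewrite Rplus_0_r. replace (g y - g y - m * 0) with 0 by ring. rewrite Rabs_R0; lra. }
  specialize (H h Hne Hh).
  replace (g (y + h) - g y - m * h) with (((g (y+h) - g y)/h - m) * h) by (field; lra).
  rewrite Rabs_mult. apply Rmult_le_compat_r; [apply Rabs_pos|lra].
Qed.

Lemma chain_within f (g : R -> R) a b t l m : deriv_within f a b t l -> derivable_pt_lim g (f t) m ->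
  deriv_within (fun s => g (f s)) a b t (m * l).
Proof.
  intros Hf Hg. apply of_dw. intros eps Heps.
  set (M := Rabs l + 1). assert (HM : 0 < M) by (unfold M; pose proof (Rabs_pos l); lra).
  set (Mm := Rabs m + 1). assert (HMm : 0 < Mm) by (unfold Mm; pose proof (Rabs_pos m); lra).
  destruct (dpl_alt g (f t) m Hg (eps / (2 * M))) as [d1 [Hd1 H1]].
  { apply Rdiv_lt_0_compat; lra. }
  set (e2 := Rmin 1 (eps / (2 * Mm))).
  assert (He2 : 0 < e2) by (apply Rmin_pos; [lra| apply Rdiv_lt_0_compat; lra]).
  destruct (dw_of _ _ _ _ _ Hf e2 He2) as [d2 [Hd2 H2]].
  destruct (deriv_cont _ _ _ _ _ Hf d1 Hd1) as [d3 [Hd3 H3]].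
  exists (Rmin d2 d3). split; [apply Rmin_pos; lra|].
  intros s Hs Hst.
  pose proof (Rmin_l d2 d3). pose proof (Rmin_r d2 d3).
  specialize (H2 s Hs ltac:(lra)). specialize (H3 s Hs ltac:(lra)).
  set (h := f s - f t) in *.
  specialize (H1 h H3). replace (f t + h) with (f s) in H1 by (unfold h; ring).
  assert (He2a : e2 <= 1) by apply Rmin_l.
  assert (He2b : e2 <= eps / (2 * Mm)) by apply Rmin_r.
  assert (Hh : Rabs h <= M * Rabs (s - t)).
  { unfold M. replace h with ((h - l * (s - t)) + l * (s - t)) by ring.
    eapply Rle_trans. apply Rabs_triang. rewrite Rabs_mult.
    pose proof (Rabs_pos (s - t)).
    assert (e2 * Rabs (s-t) <= 1 * Rabs (s-t)) by (apply Rmult_le_compat_r; lra). lra. }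
  replace (g (f s) - g (f t) - m * l * (s - t)) with
    ((g (f s) - g (f t) - m * h) + m * (h - l * (s - t))) by (unfold h; ring).
  eapply Rle_trans. apply Rabs_triang. rewrite Rabs_mult.
  pose proof (Rabs_pos (s - t)). pose proof (Rabs_pos m).
  assert (A1 : eps / (2 * M) * Rabs h <= eps / 2 * Rabs (s - t)).
  { apply Rle_trans with (eps / (2 * M) * (M * Rabs (s - t))).
    apply Rmult_le_compat_l; [left; apply Rdiv_lt_0_compat; lra| auto].
    right; field; lra. }
  assert (A2 : Rabs m * Rabs (h - l * (s - t)) <= eps / 2 * Rabs (s - t)).
  { apply Rle_trans with (Rabs m * (e2 * Rabs (s - t))).
    apply Rmult_le_compat_l; auto.
    apply Rle_trans with (Rabs m * (eps / (2 * Mm) * Rabs (s - t))).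
    apply Rmult_le_compat_l; auto. apply Rmult_le_compat_r; auto.
    replace (Rabs m * (eps / (2 * Mm) * Rabs (s - t))) with
      ((Rabs m / Mm) * (eps / 2 * Rabs (s - t))) by (field; lra).
    rewrite <- (Rmult_1_l (eps / 2 * Rabs (s - t))) at 2.
    apply Rmult_le_compat_r. apply Rmult_le_pos; lra.
    apply Rmult_le_reg_r with Mm; auto. unfold Rdiv; rewrite Rmult_assoc, Rinv_l by lra; unfold Mm; lra. }
  lra.
Qed.

Lemma reparam_within f T t l : deriv_within f 0 T (T - t) l ->
  deriv_within (fun s => f (T - s)) 0 T t (- l).
Proof.
  intros Hd. apply of_dw. intros eps Heps. destruct (dw_of _ _ _ _ _ Hd eps Heps) as [d [Hd0 H]].
  exists d; split; auto. intros s Hs Hst.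
  specialize (H (T - s) ltac:(lra)). replace (T - s - (T - t)) with (- (s - t)) in H by ring.
  rewrite Rabs_Ropp in H. specialize (H Hst).
  replace (f (T - s) - f (T - t) - - l * (s - t)) with (f (T - s) - f (T - t) - l * - (s - t)) by ring.
  auto.
Qed.

Lemma cw_cpt f a b t : a <= b -> a <= t <= b -> cont_within f a b t ->
  continuity_pt (fun x => f (cl a b x)) t.
Proof.
  intros Hab Ht Hc eps Heps. destruct (Hc eps Heps) as [d [Hd H]].
  exists d; split; [exact Hd|]. intros x [_ Hx]. simpl in *. unfold R_dist in *.
  rewrite (cl_id a b t Ht).
  apply H. apply cl_in; auto. eapply Rle_lt_trans; [| exact Hx].
  rewrite <- (cl_id a b t Ht) at 1. apply cl_lip; auto.
Qed.

Lemma cpt_cw f a b t : a <= t <= b ->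
  continuity_pt (fun x => f (cl a b x)) t -> cont_within f a b t.
Proof.
  intros Ht Hc eps Heps. destruct (Hc eps Heps) as [d [Hd H]]. exists d; split; auto.
  intros s Hs Hst. simpl in H. unfold R_dist in H.
  specialize (H s). rewrite (cl_id a b s Hs), (cl_id a b t Ht) in H.
  destruct (Req_dec s t) as [->|Hne]. rewrite Rminus_diag, Rabs_R0; lra.
  apply H. split; auto. split; auto. exact I.
Qed.

Lemma cw_of_cpt f a b t : continuity_pt f t -> cont_within f a b t.
Proof.
  intros Hc eps Heps. destruct (Hc eps Heps) as [d [Hd H]]. exists d; split; auto.
  intros s Hs Hst. destruct (Req_dec s t) as [->|Hne]. rewrite Rminus_diag, Rabs_R0; lra.
  apply (H s). split; [split; [exact I| auto]| auto].
Qed.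

Lemma cw_plus f g a b t : a <= b -> a <= t <= b -> cont_within f a b t -> cont_within g a b t ->
  cont_within (fun s => f s + g s) a b t.
Proof.
  intros Hab Ht Hf Hg. apply cpt_cw; auto. apply continuity_pt_plus; apply cw_cpt; auto.
Qed.

Lemma cw_mult f g a b t : a <= b -> a <= t <= b -> cont_within f a b t -> cont_within g a b t ->
  cont_within (fun s => f s * g s) a b t.
Proof.
  intros Hab Ht Hf Hg. apply cpt_cw; auto. apply continuity_pt_mult; apply cw_cpt; auto.
Qed.

Lemma cw_comp f (g : R -> R) a b t : a <= b -> a <= t <= b -> cont_within f a b t -> continuity_pt g (f t) ->
  cont_within (fun s => g (f s)) a b t.
Proof.
  intros Hab Ht Hf Hg. apply cpt_cw; auto.
  apply (continuity_pt_comp (fun x => f (cl a b x)) g). apply cw_cpt; auto.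
  rewrite cl_id; auto.
Qed.

Lemma cw_reparam f T t : 0 <= T -> 0 <= t <= T -> cont_within f 0 T (T - t) ->
  cont_within (fun s => f (T - s)) 0 T t.
Proof.
  intros HT Ht Hc eps Heps. destruct (Hc eps Heps) as [d [Hd H]]. exists d; split; auto.
  intros s Hs Hst. apply H. lra. replace (T - s - (T - t)) with (- (s - t)) by ring. rewrite Rabs_Ropp; auto.
Qed.

Lemma cw_sub f a b a' b' t : a <= a' -> b' <= b -> cont_within f a b t -> cont_within f a' b' t.
Proof. apply cont_within_sub. Qed.

Lemma mvt_bound f df x y K E : (forall c, is_derive f c (df c)) ->
  (forall c, Rmin x y <= c <= Rmax x y -> Rabs (df c - K) <= E) ->
  Rabs (f y - f x - K * (y - x)) <= E * Rabs (y - x).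
Proof.
  intros Hd Hb.
  destruct (MVT_gen (fun s => f s - K * s) x y (fun c => df c - K)) as [c [Hc Heq]].
  - intros z _. apply (is_derive_minus f (fun s => K * s)); auto.
    auto_derive; [auto| ring].
  - intros z _. apply continuity_pt_minus.
    + apply (proj2 (continuity_pt_filterlim _ _)). apply (ex_derive_continuous f z). exists (df z); auto.
    + apply continuity_pt_mult. apply continuity_pt_const. intros u v; auto. apply continuity_pt_id.
  - replace (f y - f x - K * (y - x)) with (f y - K * y - (f x - K * x)) by ring.
    rewrite Heq, Rabs_mult. apply Rmult_le_compat_r; [apply Rabs_pos| auto].
Qed.

Lemma lip_of_deriv f df B : (forall c, is_derive f c (df c)) -> (forall c, Rabs (df c) <= B) ->
  forall x y, Rabs (f x - f y) <= B * Rabs (x - y).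
Proof.
  intros Hd Hb x y. pose proof (mvt_bound f df y x 0 B Hd).
  rewrite Rmult_0_l, Rminus_0_r in H. apply H. intros. rewrite Rminus_0_r; auto.
Qed.

Lemma half_pow_pos n : 0 < (/2)^n.
Proof. apply pow_lt; lra. Qed.

Lemma half_pow_small e : 0 < e -> exists N, forall n, (N <= n)%nat -> (/2)^n < e.
Proof.
  intros He. destruct (pow_lt_1_zero (/2)) with e as [N HN]; auto.
  { rewrite Rabs_pos_eq; lra. }
  exists N; intros n Hn. specialize (HN n Hn). rewrite Rabs_pos_eq in HN; auto.
  left; apply half_pow_pos.
Qed.

Lemma vanish x y c : 0 <= c -> (forall n, x <= y + c * (/2)^n) -> x <= y.
Proof.
  intros Hc H. apply Rle_plus_epsilon. intros e He.
  destruct (half_pow_small (e / (c + 1))) as [N HN]. apply Rdiv_lt_0_compat; lra.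
  specialize (HN N (le_n _)). specialize (H N).
  assert (c * (/2)^N <= e).
  { apply Rle_trans with ((c+1) * (e / (c+1))). pose proof (half_pow_pos N).
    apply Rle_trans with ((c+1) * (/2)^N). nra. apply Rmult_le_compat_l; lra.
    right; field; lra. }
  lra.
Qed.

Lemma geom_cauchy (a : nat -> R) c : (forall n, Rabs (a (S n) - a n) <= c * (/2)^n) ->
  forall n k, Rabs (a (n + k)%nat - a n) <= 2 * c * ((/2)^n - (/2)^(n+k)).
Proof.
  intros H n k. induction k.
  - rewrite Nat.add_0_r, Rminus_diag, Rabs_R0. lra.
  - replace (n + S k)%nat with (S (n + k)) by lia.
    replace (a (S (n + k)) - a n) with ((a (S (n+k)) - a (n + k)%nat) + (a (n+k)%nat - a n)) by ring.
    eapply Rle_trans. apply Rabs_triang. specialize (H (n + k)%nat). simpl pow.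
    lra.
Qed.

Lemma geom_lim (a : nat -> R) c : (forall n, Rabs (a (S n) - a n) <= c * (/2)^n) ->
  forall n, Rabs (a n - Lim_seq a) <= 2 * c * (/2)^n.
Proof.
  intros H.
  assert (Hc : 0 <= c). { specialize (H O). simpl in H. pose proof (Rabs_pos (a 1%nat - a 0%nat)). lra. }
  assert (HC := geom_cauchy a c H).
  assert (Hb : forall n m, (n <= m)%nat -> Rabs (a m - a n) <= 2 * c * (/2)^n).
  { intros n m Hnm. replace m with (n + (m - n))%nat by lia.
    eapply Rle_trans. apply HC. pose proof (half_pow_pos (n + (m - n))). nra. }
  assert (Hex : ex_finite_lim_seq a).
  { apply ex_lim_seq_cauchy_corr. intros eps.
    destruct (half_pow_small (eps / (4 * c + 1))) as [N HN]. apply Rdiv_lt_0_compat; [apply cond_pos| lra].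
    exists N. intros n m Hn Hm.
    assert (Hn' := Hb N n Hn). assert (Hm' := Hb N m Hm). specialize (HN N (le_n _)).
    assert (2 * c * (/2)^N < eps / 2).
    { pose proof (cond_pos eps). pose proof (half_pow_pos N).
      apply Rle_lt_trans with ((4 * c + 1) / 2 * (/2)^N). nra.
      apply Rlt_le_trans with ((4*c+1)/2 * (eps / (4 * c + 1))).
      apply Rmult_lt_compat_l; auto; lra. right; field; lra. }
    replace (a n - a m) with ((a n - a N) - (a m - a N)) by ring.
    eapply Rle_lt_trans. apply Rabs_triang. rewrite Rabs_Ropp. lra. }
  destruct Hex as [l Hl].
  pose proof (is_lim_seq_unique _ _ Hl) as Hu. rewrite Hu. simpl.
  apply is_lim_seq_spec in Hl. simpl in Hl.
  intros n. apply Rle_plus_epsilon. intros e He.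
  destruct (Hl (mkposreal e He)) as [M HM]. simpl in HM.
  specialize (HM (max n M) (Nat.le_max_r _ _)). specialize (Hb n (max n M) (Nat.le_max_l _ _)).
  replace (a n - l) with (- (a (max n M) - a n) + (a (max n M) - l)) by ring.
  eapply Rle_trans. apply Rabs_triang. rewrite Rabs_Ropp. lra.
Qed.

Lemma bielecki f df T L K : 0 < T -> 0 <= L -> 0 <= K -> f 0 = 0 ->
  (forall x, 0 < x < T -> is_derive f x (df x) /\ Rabs (df x) <= L * K * exp (2 * L * x)) ->
  (forall x, 0 <= x <= T -> cont_within f 0 T x) ->
  forall t, 0 <= t <= T -> Rabs (f t) <= K / 2 * exp (2 * L * t).
Proof.
  intros HT HL HK H0 Hd Hc t Ht.
  assert (Hexp : forall x, is_derive (fun x => K / 2 * exp (2 * L * x)) x (K * L * exp (2 * L * x))).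
  { intros x. auto_derive; auto. field. }
  assert (Hce : forall x, continuity_pt (fun x => K / 2 * exp (2 * L * x)) x).
  { intros x. apply (proj2 (continuity_pt_filterlim _ _)). apply (ex_derive_continuous (fun x => K / 2 * exp (2 * L * x)) x). eexists; apply Hexp. }
  assert (Hcw : forall x, 0 <= x <= t -> cont_within f 0 t x).
  { intros x Hx. apply cw_sub with 0 T; try lra. apply Hc; lra. }
  assert (A1 : f t - K / 2 * exp (2 * L * t) <= f 0 - K / 2 * exp (2 * L * 0)).
  { apply (mono_le (fun x => f x - K / 2 * exp (2 * L * x)) (fun x => df x - K * L * exp (2 * L * x)) 0 t).
    lra.
    - intros x Hx. destruct (Hd x ltac:(lra)) as [Hd1 Hd2]. split.
      + apply (is_derive_minus f); auto.
      + unfold Rabs in Hd2; destruct Rcase_abs; nra.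
    - apply cw_plus; try lra. apply Hcw; lra. apply cw_of_cpt.
      apply continuity_pt_opp. apply Hce.
    - apply cw_plus; try lra. apply Hcw; lra. apply cw_of_cpt.
      apply continuity_pt_opp. apply Hce. }
  assert (A2 : - f t - K / 2 * exp (2 * L * t) <= - f 0 - K / 2 * exp (2 * L * 0)).
  { apply (mono_le (fun x => - f x - K / 2 * exp (2 * L * x)) (fun x => - df x - K * L * exp (2 * L * x)) 0 t).
    lra.
    - intros x Hx. destruct (Hd x ltac:(lra)) as [Hd1 Hd2]. split.
      + apply (is_derive_minus (fun x => - f x)); auto. apply (is_derive_opp f); auto.
      + unfold Rabs in Hd2; destruct Rcase_abs; nra.
    - apply cw_plus; try lra. apply cw_comp with (g := Ropp); try lra. apply Hcw; lra.
      apply continuity_pt_opp, continuity_pt_id. apply cw_of_cpt.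
      apply continuity_pt_opp. apply Hce.
    - apply cw_plus; try lra. apply cw_comp with (g := Ropp); try lra. apply Hcw; lra.
      apply continuity_pt_opp, continuity_pt_id. apply cw_of_cpt.
      apply continuity_pt_opp. apply Hce. }
  rewrite H0, Rmult_0_r, exp_0 in *. unfold Rabs; destruct Rcase_abs; lra.
Qed.

Lemma Rsum_nil f : Rsum [] f = 0. Proof. reflexivity. Qed.
Lemma Rsum_cons i l f : Rsum (i :: l) f = f i + Rsum l f. Proof. reflexivity. Qed.

Lemma Rsum_ext l f g : (forall i, In i l -> f i = g i) -> Rsum l f = Rsum l g.
Proof. induction l; simpl; intros H; auto. rewrite H, IHl; auto. Qed.

Lemma Rsum_scal l f c : Rsum l (fun i => c * f i) = c * Rsum l f.
Proof. induction l; simpl. ring. rewrite IHl; ring. Qed.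

Lemma Rsum_plus l f g : Rsum l (fun i => f i + g i) = Rsum l f + Rsum l g.
Proof. induction l; simpl. ring. rewrite IHl; ring. Qed.

Lemma Rsum_le l f g : (forall i, In i l -> f i <= g i) -> Rsum l f <= Rsum l g.
Proof. induction l; simpl; intros H. lra. pose proof (H a (or_introl eq_refl)).
  assert (Rsum l f <= Rsum l g) by (apply IHl; auto). lra. Qed.

Lemma Rsum_nonneg l f : (forall i, In i l -> 0 <= f i) -> 0 <= Rsum l f.
Proof. intros H. induction l; simpl. lra.
  pose proof (H a (or_introl eq_refl)). assert (0 <= Rsum l f) by (apply IHl; intros; apply H; simpl; auto). lra. Qed.

Lemma Rsum_pos l f : l <> [] -> (forall i, In i l -> 0 < f i) -> 0 < Rsum l f.
Proof. destruct l as [|a l]; [congruence|]. intros _ H. simpl.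
  pose proof (H a (or_introl eq_refl)).
  assert (0 <= Rsum l f) by (apply Rsum_nonneg; intros; left; apply H; simpl; auto). lra. Qed.

Lemma Rsum_ge_elem l f j : (forall i, In i l -> 0 <= f i) -> In j l -> f j <= Rsum l f.
Proof.
  induction l; simpl; intros H Hj. contradiction.
  destruct Hj as [->|Hj].
  - assert (0 <= Rsum l f) by (apply Rsum_nonneg; auto). lra.
  - pose proof (H a (or_introl eq_refl)). pose proof (IHl (fun i Hi => H i (or_intror Hi)) Hj). lra.
Qed.

Lemma Rpower_pos x y : 0 < Rpower x y.
Proof. unfold Rpower; apply exp_pos. Qed.

Lemma Rpower_le_pos a b e : 0 <= e -> 0 < a <= b -> Rpower a e <= Rpower b e.
Proof. apply Rle_Rpower_l. Qed.

Lemma Rpower_le_neg a b e : 0 <= e -> 0 < a <= b -> Rpower b (- e) <= Rpower a (- e).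
Proof.
  intros He Hab. rewrite !Rpower_Ropp. apply Rinv_le_contravar. apply Rpower_pos.
  apply Rpower_le_pos; auto.
Qed.

Lemma Rpower_inv_pow x a : 0 < x -> 0 < a -> Rpower (Rpower x (- / a)) (- a) = x.
Proof.
  intros Hx Ha. rewrite Rpower_mult. replace (- / a * - a) with 1 by (field; lra).
  apply Rpower_1; auto.
Qed.

Lemma list_upd_length q i x : length (list_upd q i x) = length q.
Proof. revert i; induction q; intros [|i]; simpl; auto. Qed.

Lemma coord_upd q i x j : (i < length q)%nat ->
  coord (list_upd q i x) j = if Nat.eqb j i then x else coord q j.
Proof.
  unfold coord. revert i j; induction q as [|h t IH]; intros i j Hi; simpl in Hi. lia.
  destruct i as [|i]; destruct j as [|j]; simpl; auto.
  apply IH; lia.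
Qed.

Lemma zfin (Rl : Z -> R -> Prop) lo (k : nat) :
  (forall h M M', Rl h M -> M <= M' -> Rl h M') ->
  (forall h, (lo <= h <= lo + Z.of_nat k)%Z -> exists M, Rl h M) ->
  exists M, forall h, (lo <= h <= lo + Z.of_nat k)%Z -> Rl h M.
Proof.
  intros Hm. induction k; intros H.
  - destruct (H lo) as [M HM]. lia. exists M. intros h Hh. replace h with lo by lia. auto.
  - destruct IHk as [M1 H1]. { intros h Hh. apply H. lia. }
    destruct (H (lo + Z.of_nat (S k))%Z) as [M2 H2]. lia.
    exists (Rmax M1 M2). intros h Hh.
    destruct (Z.eq_dec h (lo + Z.of_nat (S k))%Z) as [->|Hne].
    + eapply Hm; eauto. apply Rmax_r.
    + eapply Hm. apply H1. lia. apply Rmax_l.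
Qed.

Lemma inQN_cons n qbar h t : inQN (S n) qbar (h :: t) <->
  ((- Z.of_nat qbar <= h <= Z.of_nat qbar)%Z /\ inQN n qbar t).
Proof.
  unfold inQN; simpl. split.
  - intros [Hl H]. split. apply (H O); lia. split. lia. intros i Hi. apply (H (S i)); lia.
  - intros [Hh [Hl H]]. split. lia. intros [|i] Hi. exact Hh. apply H; lia.
Qed.

Lemma fin_bound N qbar (P : list Z -> R -> Prop) :
  (forall q M M', P q M -> M <= M' -> P q M') ->
  (forall q, inQN N qbar q -> exists M, P q M) ->
  exists M, forall q, inQN N qbar q -> P q M.
Proof.
  revert P. induction N as [|n IH]; intros P Hm H.
  - destruct (H []) as [M HM]. { split; simpl; auto; intros; lia. }
    exists M. intros q [Hq _]. destruct q; simpl in Hq; [auto| lia].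
  - assert (Hh : forall h, (- Z.of_nat qbar <= h <= - Z.of_nat qbar + Z.of_nat (2 * qbar))%Z ->
        exists M, forall t, inQN n qbar t -> P (h :: t) M).
    { intros h Hh. apply (IH (fun t M => P (h :: t) M)).
      - intros; eapply Hm; eauto.
      - intros t Ht. apply H. apply inQN_cons. split; auto. lia. }
    destruct (zfin (fun h M => forall t, inQN n qbar t -> P (h :: t) M) _ _
      ltac:(intros h0 M0 M1 HM0 HM1 t Ht; eapply Hm; [apply HM0; auto| auto]) Hh) as [M HM].
    exists M. intros q Hq. destruct q as [|h t]. { destruct Hq as [Hl _]; simpl in Hl; lia. }
    apply inQN_cons in Hq. destruct Hq as [Hh1 Ht]. apply HM; auto. lia.
Qed.

Lemma fin_bound_f N qbar (f : list Z -> R) : exists M, forall q, inQN N qbar q -> f q <= M.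
Proof.
  apply (fin_bound N qbar (fun q M => f q <= M)). intros; lra.
  intros q _. exists (f q). lra.
Qed.
Section Model.
Variables (N qbar : nat) (T A k sigma c varpi eta : R) (gamma : nat -> R).
Hypotheses (HN : (1 <= N)%nat) (HT : 0 < T) (HA : 0 < A) (Hk : 0 < k) (Hsigma : 0 < sigma)
  (Hc : 0 < c) (Hvarpi : 0 < varpi) (Heta : 0 < eta)
  (Hgamma : forall i, (i < N)%nat -> 0 < gamma i).

Definition alpha := k * varpi / (sigma * eta).
Definition pp := / alpha.
Lemma alpha_pos : 0 < alpha.
Proof. unfold alpha. apply Rdiv_lt_0_compat; apply Rmult_lt_0_compat; auto. Qed.
Lemma pp_pos : 0 < pp.
Proof. unfold pp. apply Rinv_0_lt_compat, alpha_pos. Qed.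

Definition CC := Cconst N A k sigma c varpi eta gamma.
Lemma CC_nonneg : 0 <= CC.
Proof.
  unfold CC, Cconst.
  assert (0 <= Rsum (idx N) (fun i => / (k * varpi + sigma * gamma i))).
  { apply Rsum_nonneg. intros i Hi. unfold idx in Hi. apply in_seq in Hi.
    pose proof (Hgamma i ltac:(lia)). left. apply Rinv_0_lt_compat.
    pose proof (Rmult_lt_0_compat _ _ Hk Hvarpi). pose proof (Rmult_lt_0_compat _ _ Hsigma H). lra. }
  pose proof (Rmult_lt_0_compat _ _ Hk Hvarpi). pose proof (Rmult_lt_0_compat _ _ Hsigma Heta).
  pose proof (Rmult_lt_0_compat _ _ Heta Hsigma).
  set (S := 1 + eta * sigma * Rsum (idx N) (fun i => / (k * varpi + sigma * gamma i))).
  assert (0 < S) by (unfold S; nra).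
  set (E := exp _). assert (0 < E) by apply exp_pos.
  assert (0 < sigma * eta / (k * varpi + sigma * eta)) by (apply Rdiv_lt_0_compat; lra).
  left. repeat apply Rmult_lt_0_compat; auto.
  apply Rinv_0_lt_compat; lra.
Qed.

Definition CSq q := CS N sigma eta gamma q.
Definition QN q := inQN N qbar q.
Definition act (phi : Z) q := act_idx N qbar gamma phi q.

Definition Hl (l : list nat) (g : nat -> R) : R :=
  Rpower (Rsum l (fun i => Rpower (g i) (- pp))) (- alpha).

Definition Hs (phi : Z) q (x : list Z -> R) : R :=
  match act phi q with [] => 0 | _ => Hl (act phi q) (fun i => x (qminus q i phi)) end.

Lemma Hl_pos l g : 0 < Hl l g.
Proof. apply Rpower_pos. Qed.

Lemma Hs_nonneg phi q x : 0 <= Hs phi q x.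
Proof. unfold Hs. destruct (act phi q); [lra| left; apply Hl_pos]. Qed.

Lemma Hl_le_each l g j : In j l -> 0 < g j -> Hl l g <= g j.
Proof.
  intros Hj Hg. unfold Hl.
  rewrite <- (Rpower_inv_pow (g j) alpha Hg alpha_pos). change (- / alpha) with (- pp).
  apply Rpower_le_neg. left; apply alpha_pos. split. apply Rpower_pos.
  apply (Rsum_ge_elem l (fun i => Rpower (g i) (- pp))); auto.
  intros; left; apply Rpower_pos.
Qed.

Lemma Hl_mono l g g' : (forall i, In i l -> 0 < g i <= g' i) -> Hl l g <= Hl l g'.
Proof.
  intros H. unfold Hl. destruct l as [|a l0].
  { simpl. lra. }
  apply Rpower_le_neg. left; apply alpha_pos. split.
  - apply Rsum_pos. congruence. intros; apply Rpower_pos.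
  - apply Rsum_le. intros i Hi. apply Rpower_le_neg. left; apply pp_pos. apply H; auto.
Qed.

Lemma Hl_hom l g cst : l <> [] -> 0 < cst -> (forall i, In i l -> 0 < g i) ->
  Hl l (fun i => cst * g i) = cst * Hl l g.
Proof.
  intros Hl0 Hc0 Hg. unfold Hl.
  rewrite (Rsum_ext l (fun i => Rpower (cst * g i) (- pp)) (fun i => Rpower cst (- pp) * Rpower (g i) (- pp))).
  2:{ intros i Hi. rewrite Rpower_mult_distr; auto. }
  rewrite Rsum_scal.
  assert (0 < Rsum l (fun i => Rpower (g i) (- pp))) by (apply Rsum_pos; auto; intros; apply Rpower_pos).
  rewrite <- Rpower_mult_distr; auto. 2: apply Rpower_pos.
  f_equal. rewrite Rpower_mult. unfold pp. replace (- / alpha * - alpha) with 1.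
  apply Rpower_1; auto. pose proof alpha_pos. field. lra.
Qed.

Lemma Hl_lip_half l g g' d : l <> [] -> 0 <= d -> (forall i, In i l -> 0 < g i /\ 0 < g' i /\ g' i <= g i + d) ->
  Hl l g' <= Hl l g + d.
Proof.
  intros Hl0 Hd H. set (H0 := Hl l g). assert (HH0 : 0 < H0) by apply Hl_pos.
  apply Rle_trans with (Hl l (fun i => (1 + d / H0) * g i)).
  - apply Hl_mono. intros i Hi. destruct (H i Hi) as [Hg1 [Hg2 Hg3]]. split; auto.
    assert (H0 <= g i) by (apply Hl_le_each; auto).
    assert (d <= d / H0 * g i).
    { apply Rle_trans with (d / H0 * H0). right; field; lra.
      apply Rmult_le_compat_l; auto. apply Rmult_le_pos; [lra| left; apply Rinv_0_lt_compat; lra]. }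
    lra.
  - rewrite Hl_hom; auto. fold H0. right; field; lra.
    assert (0 <= d / H0) by (apply Rmult_le_pos; [lra| left; apply Rinv_0_lt_compat; lra]). lra.
    intros i Hi; apply H; auto.
Qed.

Lemma Hl_lip l g g' d : 0 <= d -> (forall i, In i l -> 0 < g i /\ 0 < g' i /\ Rabs (g i - g' i) <= d) ->
  Rabs (Hl l g - Hl l g') <= d.
Proof.
  intros Hd H. destruct l as [|j l']. { unfold Hl; simpl. rewrite Rminus_diag, Rabs_R0; auto. }
  assert (A1 : Hl (j :: l') g' <= Hl (j :: l') g + d).
  { apply Hl_lip_half; auto. congruence. intros i Hi. destruct (H i Hi) as [? [? Ha]].
    repeat split; auto. unfold Rabs in Ha; destruct Rcase_abs; lra. }
  assert (A2 : Hl (j :: l') g <= Hl (j :: l') g' + d).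
  { apply Hl_lip_half; auto. congruence. intros i Hi. destruct (H i Hi) as [? [? Ha]].
    repeat split; auto. unfold Rabs in Ha; destruct Rcase_abs; lra. }
  unfold Rabs; destruct Rcase_abs; lra.
Qed.

Lemma act_in phi q i : In i (act phi q) -> (i < N)%nat /\ (- Z.of_nat qbar < phi * coord q i)%Z.
Proof.
  unfold act, act_idx, Gset, idx. intros H. apply filter_In in H. destruct H as [H1 H2].
  apply filter_In in H1. destruct H1 as [H1 _]. apply in_seq in H1. split. lia.
  apply Z.ltb_lt; auto.
Qed.

Lemma neighbor_QN phi q i : QN q -> (phi = 1 \/ phi = -1)%Z -> In i (act phi q) -> QN (qminus q i phi).
Proof.
  intros [Hlen Hq] Hphi Hi. apply act_in in Hi. destruct Hi as [Hi Hb].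
  unfold QN, inQN, qminus. rewrite list_upd_length. split; auto.
  intros j Hj. rewrite coord_upd by lia. destruct (Nat.eqb_spec j i) as [->|].
  - specialize (Hq i Hi). destruct Hphi as [->| ->]; lia.
  - apply Hq; auto.
Qed.

Lemma jterm_list (l : list nat) (u g : nat -> R) (vq y : R) :
  l <> [] -> vq = - Rpower y (- pp) -> (forall i, In i l -> u i = - Rpower (g i) (- pp)) ->
  Rsum l u <> 0 /\ 0 < vq / Rsum l u /\
  Rpower (vq / Rsum l u) alpha = Rpower y (-1) * Hl l g.
Proof.
  intros Hl0 Hv Hu.
  rewrite (Rsum_ext l u (fun i => -1 * Rpower (g i) (- pp))) by (intros i Hi; rewrite Hu; auto; ring).
  rewrite Rsum_scal.
  set (S := Rsum l (fun i => Rpower (g i) (- pp))).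
  assert (HS : 0 < S) by (apply Rsum_pos; auto; intros; apply Rpower_pos).
  pose proof (Rpower_pos y (- pp)).
  replace (vq / (-1 * S)) with (Rpower y (- pp) * / S) by (rewrite Hv; field; lra).
  split; [lra|]. split. apply Rmult_lt_0_compat; auto. apply Rinv_0_lt_compat; auto.
  rewrite <- Rpower_mult_distr; auto. 2: apply Rinv_0_lt_compat; auto.
  rewrite Rpower_mult. unfold Hl. fold S. f_equal.
  - f_equal. unfold pp. field. pose proof alpha_pos; lra.
  - unfold Rpower. rewrite ln_Rinv; auto. f_equal; ring.
Qed.

Lemma jterm_eq (v : R -> list Z -> R) (x : list Z -> R) t phi q :
  QN q -> (phi = 1 \/ phi = -1)%Z ->
  (forall q', QN q' -> v t q' = - Rpower (x q') (- pp)) ->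
  jterm_welldef N qbar gamma v t phi q /\
  jterm N qbar k sigma varpi eta gamma v t phi q = Rpower (x q) (-1) * Hs phi q x.
Proof.
  intros Hq Hphi Hv. unfold jterm_welldef, jterm, denom, Hs. fold (act phi q).
  assert (Hnb : forall i, In i (act phi q) -> QN (qminus q i phi)) by (intros; apply neighbor_QN; auto).
  destruct (act phi q) as [|j l] eqn:E.
  - split. intros H; congruence. ring.
  - rewrite <- E in *.
    destruct (jterm_list (act phi q) (fun i => v t (qminus q i phi)) (fun i => x (qminus q i phi))
      (v t q) (x q)) as [H1 [H2 H3]].
    + rewrite E; congruence.
    + apply Hv; auto.
    + intros i Hi. apply Hv. apply Hnb; auto.
    + split. intros _; split; auto. change (k * varpi / (sigma * eta)) with alpha. rewrite E in *. auto.
Qed.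


Definition epsq q := exp (- alpha * Rabs (CSq q) * T) / 2.
Lemma epsq_pos q : 0 < epsq q.
Proof. unfold epsq. pose proof (exp_pos (- alpha * Rabs (CSq q) * T)). lra. Qed.

Definition clampS (x : list Z -> R) q := Rmax (epsq q) (x q).
Definition Gf (x : list Z -> R) q :=
  - alpha * CSq q * x q + alpha * CC * (Hs 1 q (clampS x) + Hs (-1) q (clampS x)).

Lemma Hl_ext l g g' : (forall i, In i l -> g i = g' i) -> Hl l g = Hl l g'.
Proof. intros H; unfold Hl; f_equal; apply Rsum_ext; intros; rewrite H; auto. Qed.

Lemma Hs_ext phi q x y : QN q -> (phi = 1 \/ phi = -1)%Z -> (forall q', QN q' -> x q' = y q') ->
  Hs phi q x = Hs phi q y.
Proof.
  intros Hq Hphi H. unfold Hs.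
  assert (Hnb : forall i, In i (act phi q) -> QN (qminus q i phi)) by (intros; apply neighbor_QN; auto).
  destruct (act phi q) eqn:E; auto. rewrite <- E in *. apply Hl_ext. intros; apply H; auto.
Qed.

Lemma Rmax_lip e a b : Rabs (Rmax e a - Rmax e b) <= Rabs (a - b).
Proof. unfold Rmax, Rabs; repeat destruct Rle_dec; repeat destruct Rcase_abs; lra. Qed.

Lemma Hs_lip phi q x y d : QN q -> (phi = 1 \/ phi = -1)%Z -> 0 <= d ->
  (forall q', QN q' -> Rabs (x q' - y q') <= d) ->
  Rabs (Hs phi q (clampS x) - Hs phi q (clampS y)) <= d.
Proof.
  intros Hq Hphi Hd H. unfold Hs.
  assert (Hnb : forall i, In i (act phi q) -> QN (qminus q i phi)) by (intros; apply neighbor_QN; auto).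
  destruct (act phi q) eqn:E. { rewrite Rminus_diag, Rabs_R0; auto. }
  rewrite <- E in *. apply Hl_lip; auto. intros i Hi. unfold clampS.
  pose proof (epsq_pos (qminus q i phi)).
  split. apply Rlt_le_trans with (1 := H0); apply Rmax_l.
  split. apply Rlt_le_trans with (1 := H0); apply Rmax_l.
  eapply Rle_trans. apply Rmax_lip. apply H; auto.
Qed.

Lemma Gf_lip MCS q x y d : (forall q', QN q' -> Rabs (CSq q') <= MCS) -> QN q -> 0 <= d ->
  (forall q', QN q' -> Rabs (x q' - y q') <= d) ->
  Rabs (Gf x q - Gf y q) <= (alpha * MCS + 2 * alpha * CC) * d.
Proof.
  intros HM Hq Hd H. unfold Gf.
  pose proof (Hs_lip 1 q x y d Hq (or_introl eq_refl) Hd H).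
  pose proof (Hs_lip (-1) q x y d Hq (or_intror eq_refl) Hd H).
  pose proof (HM q Hq). pose proof (H q Hq). pose proof alpha_pos. pose proof CC_nonneg.
  set (a1 := Hs 1 q (clampS x) - Hs 1 q (clampS y)) in *.
  set (a2 := Hs (-1) q (clampS x) - Hs (-1) q (clampS y)) in *.
  replace (- alpha * CSq q * x q + alpha * CC * (Hs 1 q (clampS x) + Hs (-1) q (clampS x)) -
   (- alpha * CSq q * y q + alpha * CC * (Hs 1 q (clampS y) + Hs (-1) q (clampS y))))
   with (- alpha * (CSq q * (x q - y q)) + alpha * CC * (a1 + a2)) by (unfold a1, a2; ring).
  eapply Rle_trans. apply Rabs_triang. rewrite !Rabs_mult, Rabs_Ropp.
  rewrite (Rabs_pos_eq alpha) by lra. rewrite (Rabs_pos_eq CC) by lra.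
  assert (Rabs (CSq q) * Rabs (x q - y q) <= MCS * d).
  { apply Rmult_le_compat; auto; apply Rabs_pos. }
  assert (Rabs (a1 + a2) <= 2 * d) by (eapply Rle_trans; [apply Rabs_triang| lra]).
  assert (alpha * (Rabs (CSq q) * Rabs (x q - y q)) <= alpha * (MCS * d)) by (apply Rmult_le_compat_l; lra).
  assert (alpha * CC * Rabs (a1 + a2) <= alpha * CC * (2 * d)).
  { apply Rmult_le_compat_l; auto. apply Rmult_le_pos; lra. }
  lra.
Qed.

Lemma lip_cont (f : R -> R) Lc : 0 <= Lc -> (forall a b, Rabs (f a - f b) <= Lc * Rabs (a - b)) ->
  forall x, continuity_pt f x.
Proof.
  intros HL H x eps Heps. exists (eps / (Lc + 1)). split. apply Rdiv_lt_0_compat; lra.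
  intros y [_ Hy]. simpl in *. unfold R_dist in *.
  eapply Rle_lt_trans. apply H.
  apply Rle_lt_trans with ((Lc + 1) * Rabs (y - x)).
  pose proof (Rabs_pos (y - x)); nra.
  apply Rlt_le_trans with ((Lc + 1) * (eps / (Lc + 1))).
  apply Rmult_lt_compat_l; lra. right; field; lra.
Qed.

Fixpoint zs (n : nat) : R -> list Z -> R :=
  match n with
  | O => fun _ _ => 1
  | S m => fun t q => 1 + RInt (fun s => Gf (zs m (cl 0 T s)) q) 0 t
  end.

Lemma zs_S_0 n q : zs (S n) 0 q = 1.
Proof. simpl. rewrite RInt_point. unfold zero; simpl. ring. Qed.

Lemma deriv_step MCS Bn n : (forall q', QN q' -> Rabs (CSq q') <= MCS) -> 0 <= Bn ->
  (forall q', QN q' -> forall a b, Rabs (zs n a q' - zs n b q') <= Bn * Rabs (a - b)) ->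
  forall q, QN q -> forall t, is_derive (fun t => zs (S n) t q) t (Gf (zs n (cl 0 T t)) q).
Proof.
  intros HM HB Hlip q Hq t.
  set (f := fun s => Gf (zs n (cl 0 T s)) q).
  assert (HMCS : 0 <= MCS) by (eapply Rle_trans; [apply Rabs_pos| apply (HM q Hq)]).
  assert (Hfl : forall a b, Rabs (f a - f b) <= ((alpha * MCS + 2 * alpha * CC) * Bn) * Rabs (a - b)).
  { intros a b. unfold f. rewrite Rmult_assoc. apply (Gf_lip MCS); auto.
    apply Rmult_le_pos; auto; apply Rabs_pos.
    intros q' Hq'. eapply Rle_trans. apply Hlip; auto.
    apply Rmult_le_compat_l; auto. apply cl_lip; lra. }
  assert (Hfc : forall x, continuous f x).
  { intros x. apply (proj1 (continuity_pt_filterlim _ _)). apply lip_cont with ((alpha * MCS + 2 * alpha * CC) * Bn); auto.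
    pose proof alpha_pos; pose proof CC_nonneg. apply Rmult_le_pos; auto. nra. }
  change (is_derive (fun t => 1 + RInt f 0 t) t (f t)).
  replace (f t) with (0 + f t) by ring.
  apply (is_derive_plus (fun _ => 1) (fun t => RInt f 0 t)).
  auto_derive; auto.
  apply (is_derive_RInt f (fun t => RInt f 0 t) 0 t); auto.
  apply filter_forall. intros b. apply (RInt_correct f 0 b). apply (ex_RInt_continuous f). intros; apply Hfc.
Qed.

Section Picard.
Variables (MCS B1 : R).
Hypotheses (HM : forall q, QN q -> Rabs (CSq q) <= MCS)
  (HB1 : forall q, QN q -> Rabs (Gf (fun _ => 1) q) <= B1)
  (HQ : exists q0, QN q0).

Definition LL := alpha * MCS + 2 * alpha * CC.
Definition KK := B1 * T + 1.
Definition RR := 2 * KK * exp (2 * LL * T).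
Definition BB := B1 + LL * RR.

Lemma MCS_nonneg : 0 <= MCS.
Proof. destruct HQ as [q0 H0]. eapply Rle_trans; [apply Rabs_pos| apply (HM q0 H0)]. Qed.
Lemma B1_nonneg : 0 <= B1.
Proof. destruct HQ as [q0 H0]. eapply Rle_trans; [apply Rabs_pos| apply (HB1 q0 H0)]. Qed.
Lemma LL_nonneg : 0 <= LL.
Proof. unfold LL. pose proof alpha_pos; pose proof CC_nonneg; pose proof MCS_nonneg. nra. Qed.
Lemma KK_pos : 0 < KK.
Proof. unfold KK. pose proof B1_nonneg. nra. Qed.
Lemma RR_nonneg : 0 <= RR.
Proof. unfold RR. pose proof KK_pos. pose proof (exp_pos (2 * LL * T)). nra. Qed.
Lemma BB_nonneg : 0 <= BB.
Proof. unfold BB. pose proof B1_nonneg; pose proof LL_nonneg; pose proof RR_nonneg. nra. Qed.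

Lemma Gf_bound x q : QN q -> (forall q', QN q' -> Rabs (x q' - 1) <= RR) -> Rabs (Gf x q) <= BB.
Proof.
  intros Hq H. pose proof (Gf_lip MCS q x (fun _ => 1) RR HM Hq RR_nonneg H).
  fold LL in H0. pose proof (HB1 q Hq). unfold BB.
  replace (Gf x q) with ((Gf x q - Gf (fun _ => 1) q) + Gf (fun _ => 1) q) by ring.
  eapply Rle_trans. apply Rabs_triang. lra.
Qed.

Lemma exp_mono_T t : 0 <= t <= T -> exp (2 * LL * t) <= exp (2 * LL * T).
Proof.
  intros Ht. destruct (Req_dec t T) as [->|]. lra. left. apply exp_increasing.
  pose proof LL_nonneg. destruct (Req_dec LL 0) as [E|].
  - rewrite E in *. exfalso. Abort.

Lemma exp_mono_T t : 0 <= t <= T -> exp (2 * LL * t) <= exp (2 * LL * T).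
Proof.
  intros Ht. pose proof LL_nonneg.
  assert (2 * LL * t <= 2 * LL * T) by nra.
  destruct H0. left; apply exp_increasing; auto. rewrite H0; lra.
Qed.

Definition Pn n : Prop :=
  (forall q, QN q -> forall a b, Rabs (zs n a q - zs n b q) <= BB * Rabs (a - b)) /\
  (forall q, QN q -> forall t, 0 <= t <= T -> Rabs (zs n t q - 1) <= 2 * KK * (1 - (/2)^n) * exp (2 * LL * t)) /\
  (forall q, QN q -> forall t, 0 <= t <= T -> Rabs (zs (S n) t q - zs n t q) <= KK * (/2)^n * exp (2 * LL * t)).

Lemma zs_R_bound n : (forall q, QN q -> forall t, 0 <= t <= T -> Rabs (zs n t q - 1) <= 2 * KK * (1 - (/2)^n) * exp (2 * LL * t)) ->
  forall q, QN q -> forall t, Rabs (zs n (cl 0 T t) q - 1) <= RR.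
Proof.
  intros H q Hq t. pose proof (cl_in 0 T t ltac:(lra)).
  eapply Rle_trans. apply H; auto. unfold RR.
  pose proof (half_pow_pos n). pose proof KK_pos. pose proof (exp_mono_T _ H0).
  pose proof (exp_pos (2 * LL * cl 0 T t)).
  apply Rle_trans with (2 * KK * 1 * exp (2 * LL * cl 0 T t)).
  apply Rmult_le_compat_r; [lra|]. apply Rmult_le_compat_l; lra.
  rewrite Rmult_1_r. apply Rmult_le_compat_l; lra.
Qed.

Lemma Pn_all n : Pn n.
Proof.
  induction n as [|n IH].
  - assert (L1 : forall q, QN q -> forall a b, Rabs (zs 0 a q - zs 0 b q) <= BB * Rabs (a - b)).
    { intros q _ a b. simpl. rewrite Rminus_diag, Rabs_R0. apply Rmult_le_pos. apply BB_nonneg. apply Rabs_pos. }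
    split; [exact L1|]. split.
    + intros q _ t _. simpl. rewrite Rminus_diag, Rabs_R0. lra.
    + intros q Hq t Ht.
      assert (Hd := deriv_step MCS BB 0 HM BB_nonneg L1 q Hq).
      pose proof (lip_of_deriv (fun t => zs 1 t q) (fun t => Gf (zs 0 (cl 0 T t)) q) B1 Hd
         ltac:(intros; apply HB1; auto) t 0).
      cbv beta in H. rewrite zs_S_0 in H. simpl zs at 2. rewrite Rminus_0_r in H.
      eapply Rle_trans. apply H. simpl pow. rewrite Rmult_1_r.
      pose proof B1_nonneg. unfold KK.
      assert (exp 0 <= exp (2 * LL * t)).
      { pose proof LL_nonneg. assert (0 <= 2 * LL * t) by nra. destruct H2. left; apply exp_increasing; auto. rewrite H2; lra. }
      rewrite exp_0 in H1. rewrite Rabs_pos_eq by lra.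
      apply Rle_trans with (B1 * T + 1). nra.
      rewrite <- (Rmult_1_r (B1*T+1)) at 1. apply Rmult_le_compat_l; nra.
  - destruct IH as [L1 [L2 L3]].
    assert (Hd := deriv_step MCS BB n HM BB_nonneg L1).
    assert (L1' : forall q, QN q -> forall a b, Rabs (zs (S n) a q - zs (S n) b q) <= BB * Rabs (a - b)).
    { intros q Hq a b. apply (lip_of_deriv (fun t => zs (S n) t q) (fun t => Gf (zs n (cl 0 T t)) q) BB (Hd q Hq)).
      intros t. apply Gf_bound; auto. intros q' Hq'. apply zs_R_bound; auto. }
    split; [exact L1'|]. split.
    + intros q Hq t Ht. specialize (L2 q Hq t Ht). specialize (L3 q Hq t Ht).
      replace (zs (S n) t q - 1) with ((zs (S n) t q - zs n t q) + (zs n t q - 1)) by ring.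
      eapply Rle_trans. apply Rabs_triang. simpl pow. lra.
    + intros q Hq t Ht.
      assert (Hd' := deriv_step MCS BB (S n) HM BB_nonneg L1').
      pose proof (bielecki (fun t => zs (S (S n)) t q - zs (S n) t q)
        (fun t => Gf (zs (S n) (cl 0 T t)) q - Gf (zs n (cl 0 T t)) q) T LL (KK * (/2)^n)
        HT LL_nonneg) as HB.
      assert (HBi : Rabs (zs (S (S n)) t q - zs (S n) t q) <= KK * (/2)^n / 2 * exp (2 * LL * t)).
      { apply HB; auto.
        - pose proof KK_pos; pose proof (half_pow_pos n); nra.
        - rewrite !zs_S_0; ring.
        - intros x Hx. split.
          + apply (is_derive_minus (fun t => zs (S (S n)) t q) (fun t => zs (S n) t q)); auto.
          + rewrite !cl_id by lra. rewrite Rmult_assoc. apply (Gf_lip MCS); auto.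
            pose proof KK_pos; pose proof (half_pow_pos n); pose proof (exp_pos (2 * LL * x)).
            apply Rmult_le_pos; [nra| lra].
            intros q' Hq'. apply L3; auto; lra.
        - intros x Hx. apply is_derive_cont_within with (Gf (zs (S n) (cl 0 T x)) q - Gf (zs n (cl 0 T x)) q).
          apply (is_derive_minus (fun t => zs (S (S n)) t q) (fun t => zs (S n) t q)); auto. }
      eapply Rle_trans. apply HBi. simpl pow. right; field.
Qed.

End Picard.

Section Limit.
Variables (MCS B1 : R).
Hypotheses (HM : forall q, QN q -> Rabs (CSq q) <= MCS)
  (HB1 : forall q, QN q -> Rabs (Gf (fun _ => 1) q) <= B1)
  (HQ : exists q0, QN q0).

Definition zl t q : R := real (Lim_seq (fun n => zs n t q)).
Let LLs := LL MCS. Let KKs := KK B1. Let BBs := BB MCS B1. Let RRs := RR MCS B1.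
Let EE := exp (2 * LL MCS * T).

Lemma zl_approx q t n : QN q -> 0 <= t <= T -> Rabs (zs n t q - zl t q) <= 2 * KKs * EE * (/2)^n.
Proof.
  intros Hq Ht. unfold zl.
  assert (H := geom_lim (fun n => zs n t q) (KK B1 * exp (2 * LL MCS * t))).
  eapply Rle_trans. apply H.
  - intros m. destruct (Pn_all MCS B1 HM HB1 HQ m) as [_ [_ L3]].
    eapply Rle_trans. apply L3; auto. right; ring.
  - pose proof (exp_mono_T MCS HM HQ t Ht). pose proof (KK_pos B1 HB1 HQ).
    pose proof (half_pow_pos n). unfold KKs, EE. 
    apply Rmult_le_compat_r. lra. rewrite <- Rmult_assoc. apply Rmult_le_compat_l. lra. exact H0.
Qed.

Lemma EE_pos : 0 < EE. Proof. apply exp_pos. Qed.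

Lemma zl_0 q : QN q -> zl 0 q = 1.
Proof.
  intros Hq. pose proof (KK_pos B1 HB1 HQ). pose proof EE_pos.
  assert (forall n, Rabs (1 - zl 0 q) <= 0 + 2 * KKs * EE * (/2)^n).
  { intros n. rewrite Rplus_0_l. destruct n. change (Rabs (zs 0 0 q - zl 0 q) <= 2 * KKs * EE * (/2)^0). apply zl_approx; auto; lra.
    rewrite <- (zs_S_0 n q). apply zl_approx; auto; lra. }
  apply vanish in H1. 2:{ unfold KKs; nra. }
  pose proof (Rabs_pos (1 - zl 0 q)). assert (Rabs (1 - zl 0 q) = 0) by lra.
  apply Rabs_eq_0 in H3. lra.
Qed.

Lemma zl_lip q a b : QN q -> 0 <= a <= T -> 0 <= b <= T -> Rabs (zl a q - zl b q) <= BBs * Rabs (a - b).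
Proof.
  intros Hq Ha Hb. pose proof (KK_pos B1 HB1 HQ). pose proof EE_pos.
  apply (vanish _ _ (4 * KKs * EE)). unfold KKs; nra.
  intros n. destruct (Pn_all MCS B1 HM HB1 HQ n) as [L1 _].
  pose proof (zl_approx q a n Hq Ha). pose proof (zl_approx q b n Hq Hb). pose proof (L1 q Hq a b).
  replace (zl a q - zl b q) with (- (zs n a q - zl a q) + (zs n a q - zs n b q) + (zs n b q - zl b q)) by ring.
  eapply Rle_trans. apply Rabs_triang. eapply Rle_trans. apply Rplus_le_compat_r. apply Rabs_triang.
  rewrite Rabs_Ropp. unfold BBs. lra.
Qed.

Lemma zl_R q t : QN q -> 0 <= t <= T -> Rabs (zl t q - 1) <= RRs.
Proof.
  intros Hq Ht. pose proof (KK_pos B1 HB1 HQ). pose proof EE_pos.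
  apply (vanish _ _ (2 * KKs * EE)). unfold KKs; nra.
  intros n. destruct (Pn_all MCS B1 HM HB1 HQ n) as [_ [L2 _]].
  pose proof (zs_R_bound MCS B1 HM HB1 HQ n L2 q Hq t). rewrite cl_id in H1 by lra.
  pose proof (zl_approx q t n Hq Ht).
  replace (zl t q - 1) with (- (zs n t q - zl t q) + (zs n t q - 1)) by ring.
  eapply Rle_trans. apply Rabs_triang. rewrite Rabs_Ropp. unfold RRs. lra.
Qed.

Lemma zl_deriv q t : QN q -> 0 <= t <= T -> deriv_within (fun s => zl s q) 0 T t (Gf (zl t) q).
Proof.
  intros Hq Ht. apply of_dw. intros eps Heps.
  pose proof (KK_pos B1 HB1 HQ). pose proof EE_pos. pose proof (LL_nonneg MCS HM HQ).
  pose proof (BB_nonneg MCS B1 HM HB1 HQ).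
  fold LLs in H1. fold BBs in H2. fold KKs in H.
  exists (eps / (LLs * BBs + 1)). split. apply Rdiv_lt_0_compat; nra.
  intros s Hs Hst. set (G := Gf (zl t) q).
  assert (Hclaim : Rabs (zl s q - zl t q - G * (s - t)) <= LLs * BBs * Rabs (s - t) * Rabs (s - t)).
  { apply (vanish _ _ (2 * KKs * EE + 2 * LLs * KKs * EE * T)).
    { assert (0 <= LLs * KKs * EE * T). repeat apply Rmult_le_pos; lra. nra. }
    intros n.
    destruct (Pn_all MCS B1 HM HB1 HQ n) as [L1 _].
    assert (Hd := deriv_step MCS BBs n HM H2 L1 q Hq).
    set (a := (/2)^n). assert (Ha : 0 < a) by apply half_pow_pos.
    assert (Hmv := mvt_bound (fun t => zs (S n) t q) (fun t => Gf (zs n (cl 0 T t)) q) t s G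
      (LLs * (2 * KKs * EE * a + BBs * Rabs (s - t))) Hd).
    assert (Hmv' : Rabs (zs (S n) s q - zs (S n) t q - G * (s - t)) <=
                   LLs * (2 * KKs * EE * a + BBs * Rabs (s - t)) * Rabs (s - t)).
    { apply Hmv. intros c0 Hc0.
      assert (Hc0' : 0 <= c0 <= T).
      { unfold Rmin, Rmax in Hc0; destruct Rle_dec; lra. }
      assert (Hct : Rabs (c0 - t) <= Rabs (s - t)).
      { unfold Rmin, Rmax in Hc0; destruct Rle_dec; unfold Rabs; repeat destruct Rcase_abs; lra. }
      rewrite cl_id by lra. unfold G. apply (Gf_lip MCS); auto.
      pose proof (Rabs_pos (s - t)).
      apply Rplus_le_le_0_compat; [left; repeat apply Rmult_lt_0_compat; lra | apply Rmult_le_pos; lra].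
      intros q' Hq'. pose proof (zl_approx q' c0 n Hq' Hc0'). pose proof (zl_lip q' c0 t Hq' Hc0' Ht).
      replace (zs n c0 q' - zl t q') with ((zs n c0 q' - zl c0 q') + (zl c0 q' - zl t q')) by ring.
      eapply Rle_trans. apply Rabs_triang. fold a in H3. fold BBs in H4.
      assert (BBs * Rabs (c0 - t) <= BBs * Rabs (s - t)) by (apply Rmult_le_compat_l; lra). lra. }
    pose proof (zl_approx q s (S n) Hq Hs). pose proof (zl_approx q t (S n) Hq Ht).
    simpl pow in H3, H4. fold a in H3, H4. fold KKs in H3, H4.
    replace (zl s q - zl t q - G * (s - t)) with
      (- (zs (S n) s q - zl s q) + (zs (S n) t q - zl t q) + (zs (S n) s q - zs (S n) t q - G * (s - t))) by ring.
    eapply Rle_trans. apply Rabs_triang. eapply Rle_trans. apply Rplus_le_compat_r. apply Rabs_triang.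
    rewrite Rabs_Ropp.
    assert (Hst2 : Rabs (s - t) <= T) by (unfold Rabs; destruct Rcase_abs; lra).
    assert (LLs * (2 * KKs * EE * a) * Rabs (s - t) <= 2 * LLs * KKs * EE * T * a).
    { replace (2 * LLs * KKs * EE * T * a) with (LLs * (2 * KKs * EE * a) * T) by ring.
      apply Rmult_le_compat_l; auto. repeat apply Rmult_le_pos; lra. }
    fold a. nra. }
  pose proof (Rabs_pos (s - t)).
  eapply Rle_trans. apply Hclaim. apply Rmult_le_compat_r; auto.
  apply Rle_trans with (LLs * BBs * (eps / (LLs * BBs + 1))).
  apply Rmult_le_compat_l; [apply Rmult_le_pos; lra| lra].
  apply Rle_trans with ((LLs * BBs + 1) * (eps / (LLs * BBs + 1))).
  apply Rmult_le_compat_r. left; apply Rdiv_lt_0_compat; nra. lra.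
  right; field; nra.
Qed.

End Limit.

Lemma is_derive_eq (f : R -> R) x l l' : is_derive f x l -> l = l' -> is_derive f x l'.
Proof. intros H ->; auto. Qed.

Lemma is_derive_exp_lin (a x : R) : is_derive (fun x => exp (a * x)) x (a * exp (a * x)).
Proof. auto_derive; auto. ring. Qed.

Lemma exp_lin_cpt a x : continuity_pt (fun x => exp (a * x)) x.
Proof.
  apply (proj2 (continuity_pt_filterlim _ _)). apply (ex_derive_continuous (fun x => exp (a * x)) x).
  eexists; apply is_derive_exp_lin.
Qed.

Lemma lower_bound q (y dy : R -> R) : y 0 = 1 ->
  (forall x, 0 < x < T -> is_derive y x (dy x) /\ - alpha * CSq q * y x <= dy x) ->
  (forall x, 0 <= x <= T -> cont_within y 0 T x) ->
  forall t, 0 <= t <= T -> 2 * epsq q <= y t.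
Proof.
  intros H0 Hd Hcw t Ht. set (a := alpha * CSq q).
  assert (Hg : exp (a * 0) * y 0 <= exp (a * t) * y t).
  { apply (mono_ge (fun x => exp (a * x) * y x) (fun x => exp (a * x) * (a * y x + dy x)) 0 t). lra.
    - intros x Hx. destruct (Hd x ltac:(lra)) as [Hd1 Hd2]. split.
      + eapply is_derive_eq. apply (is_derive_mult (fun x => exp (a * x)) y x (a * exp (a*x)) (dy x));
          [apply is_derive_exp_lin | exact Hd1 | intros; apply Rmult_comm].
        simpl. unfold mult, plus; simpl. ring.
      + apply Rmult_le_pos. left; apply exp_pos. unfold a in *. lra.
    - apply cw_mult; try lra. apply cw_of_cpt, exp_lin_cpt. apply cw_sub with 0 T; try lra. apply Hcw; lra.
    - apply cw_mult; try lra. apply cw_of_cpt, exp_lin_cpt. apply cw_sub with 0 T; try lra. apply Hcw; lra. }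
  rewrite Rmult_0_r, exp_0, H0 in Hg.
  assert (Hy : exp (- a * t) <= y t).
  { replace (- a * t) with (- (a * t)) by ring. rewrite exp_Ropp.
    pose proof (exp_pos (a * t)).
    apply Rmult_le_reg_l with (exp (a * t)); auto. rewrite Rinv_r; lra. }
  unfold epsq. replace (2 * (exp (- alpha * Rabs (CSq q) * T) / 2)) with (exp (- alpha * Rabs (CSq q) * T)) by field.
  eapply Rle_trans; [|exact Hy]. unfold a.
  destruct (Rle_lt_or_eq_dec (- alpha * Rabs (CSq q) * T) (- (alpha * CSq q) * t)).
  - pose proof alpha_pos. pose proof (Rabs_pos (CSq q)).
    assert (CSq q <= Rabs (CSq q)) by apply Rle_abs.
    assert (alpha * CSq q * t <= alpha * Rabs (CSq q) * t).
    { apply Rmult_le_compat_r; [lra|]. apply Rmult_le_compat_l; lra. }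
    assert (alpha * Rabs (CSq q) * t <= alpha * Rabs (CSq q) * T).
    { apply Rmult_le_compat_l; [nra| lra]. }
    lra.
  - left; apply exp_increasing; auto.
  - rewrite e; lra.
Qed.

Lemma Rpower_m1' y : 0 < y -> Rpower y (- (1)) = / y.
Proof. intros; rewrite Rpower_Ropp, Rpower_1; auto. Qed.
Lemma Rpower_m1 y : 0 < y -> Rpower y (-1) = / y.
Proof. intros; replace (-1) with (- (1)) by ring; apply Rpower_m1'; auto. Qed.

Lemma Rpower_one x : Rpower 1 x = 1.
Proof. unfold Rpower; rewrite ln_1, Rmult_0_r, exp_0; auto. Qed.

Lemma Phi_deriv y : 0 < y -> derivable_pt_lim (fun x => - Rpower x (- pp)) y (pp * (Rpower y (- pp) * / y)).
Proof.
  intros Hy. pose proof (derivable_pt_lim_opp _ _ _ (derivable_pt_lim_power y (- pp) Hy)) as H.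
  replace (pp * (Rpower y (- pp) * / y)) with (- (- pp * Rpower y (- pp - 1))).
  exact H. unfold Rminus. rewrite Rpower_plus, Rpower_m1'; auto. ring.
Qed.

Section Sol.
Variables (MCS B1 : R).
Hypotheses (HM : forall q, QN q -> Rabs (CSq q) <= MCS)
  (HB1 : forall q, QN q -> Rabs (Gf (fun _ => 1) q) <= B1)
  (HQ : exists q0, QN q0).

Lemma zl_lb q t : QN q -> 0 <= t <= T -> 2 * epsq q <= zl t q.
Proof.
  intros Hq Ht. apply (lower_bound q (fun s => zl s q) (fun s => Gf (zl s) q)); auto.
  - apply (zl_0 MCS B1 HM HB1 HQ q Hq).
  - intros x Hx. split.
    + apply deriv_interior with 0 T; auto. apply (zl_deriv MCS B1 HM HB1 HQ); auto; lra.
    + unfold Gf. pose proof alpha_pos. pose proof CC_nonneg.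
      pose proof (Hs_nonneg 1 q (clampS (zl x))). pose proof (Hs_nonneg (-1) q (clampS (zl x))).
      assert (0 <= alpha * CC * (Hs 1 q (clampS (zl x)) + Hs (-1) q (clampS (zl x)))).
      { apply Rmult_le_pos; [apply Rmult_le_pos|]; lra. }
      lra.
  - intros x Hx. eapply deriv_cont. apply (zl_deriv MCS B1 HM HB1 HQ); auto.
Qed.

Lemma zl_pos q t : QN q -> 0 <= t <= T -> 0 < zl t q.
Proof. intros. pose proof (zl_lb q t H H0). pose proof (epsq_pos q). lra. Qed.

Lemma Gf_zl q t : QN q -> 0 <= t <= T ->
  Gf (zl t) q = - alpha * CSq q * zl t q + alpha * CC * (Hs 1 q (zl t) + Hs (-1) q (zl t)).
Proof.
  intros Hq Ht. unfold Gf.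
  assert (HE : forall q', QN q' -> clampS (zl t) q' = zl t q').
  { intros q' Hq'. unfold clampS. apply Rmax_right. pose proof (zl_lb q' t Hq' Ht). pose proof (epsq_pos q'). lra. }
  rewrite (Hs_ext 1 q (clampS (zl t)) (zl t)), (Hs_ext (-1) q (clampS (zl t)) (zl t)); auto.
Qed.

Definition vsol t q := - Rpower (zl (T - t) q) (- pp).

Lemma vsol_deriv q t : QN q -> 0 <= t <= T ->
  deriv_within (fun s => vsol s q) 0 T t
    (pp * (Rpower (zl (T - t) q) (- pp) * / zl (T - t) q) * (- Gf (zl (T - t)) q)).
Proof.
  intros Hq Ht. unfold vsol.
  apply (chain_within (fun s => zl (T - s) q) (fun x => - Rpower x (- pp))).
  - apply (reparam_within (fun s => zl s q)). apply (zl_deriv MCS B1 HM HB1 HQ); auto; lra.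
  - apply Phi_deriv. apply zl_pos; auto; lra.
Qed.

Lemma vsol_solution : is_solution N qbar T A k sigma c varpi eta gamma vsol.
Proof.
  intros q Hq. split; [|split].
  - exists (fun t => pp * (Rpower (zl (T - t) q) (- pp) * / zl (T - t) q) * (- Gf (zl (T - t)) q)).
    intros t Ht.
    assert (Hx : forall q', QN q' -> vsol t q' = - Rpower (zl (T - t) q') (- pp)) by reflexivity.
    destruct (jterm_eq vsol (zl (T - t)) t 1 q Hq (or_introl eq_refl) Hx) as [W1 J1].
    destruct (jterm_eq vsol (zl (T - t)) t (-1) q Hq (or_intror eq_refl) Hx) as [W2 J2].
    split; [apply vsol_deriv; auto; lra|]. split; auto. split; auto.
    rewrite J1, J2. rewrite Gf_zl by (auto; lra).
    pose proof (zl_pos q (T - t) Hq ltac:(lra)). rewrite Rpower_m1 by auto.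
    unfold vsol. fold (CSq q). fold CC. unfold pp. pose proof alpha_pos. field. split; lra.
  - eapply deriv_cont. apply vsol_deriv; auto; lra.
  - unfold vsol. rewrite Rminus_diag. rewrite (zl_0 MCS B1 HM HB1 HQ q Hq). rewrite Rpower_one; auto.
Qed.

Lemma vsol_bounded : bounded_on N qbar T vsol.
Proof.
  exists (exp (MCS * T)). intros t q Ht Hq. unfold vsol.
  rewrite Rabs_Ropp, Rabs_pos_eq by (left; apply Rpower_pos).
  pose proof (zl_lb q (T - t) Hq ltac:(lra)).
  pose proof (epsq_pos q).
  eapply Rle_trans. apply Rpower_le_neg. left; apply pp_pos. split; [| exact H]. lra.
  unfold epsq. replace (2 * (exp (- alpha * Rabs (CSq q) * T) / 2)) with (exp (- alpha * Rabs (CSq q) * T)) by field.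
  unfold Rpower. rewrite ln_exp. unfold pp.
  replace (- / alpha * (- alpha * Rabs (CSq q) * T)) with (Rabs (CSq q) * T) by (field; pose proof alpha_pos; lra).
  destruct (Rle_lt_or_eq_dec (Rabs (CSq q) * T) (MCS * T)).
  - apply Rmult_le_compat_r; [lra| auto].
  - left; apply exp_increasing; auto.
  - rewrite e; lra.
Qed.

Lemma vsol_neg t q : vsol t q < 0.
Proof. unfold vsol. pose proof (Rpower_pos (zl (T - t) q) (- pp)). lra. Qed.

End Sol.

Lemma cw_minus f g a b t : a <= b -> a <= t <= b -> cont_within f a b t -> cont_within g a b t ->
  cont_within (fun s => f s - g s) a b t.
Proof.
  intros Hab Ht Hf Hg. apply (cw_plus f (fun s => - g s)); auto.
  apply (cw_comp g Ropp); auto. apply continuity_pt_opp, continuity_pt_id.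
Qed.

Lemma Psi_deriv x : x < 0 -> is_derive (fun x => Rpower (- x) (- alpha)) x (alpha * (Rpower (- x) (- alpha) * / (- x))).
Proof.
  intros Hx. eapply is_derive_eq.
  apply (is_derive_comp (fun y => Rpower y (- alpha)) (fun x => - x) x (- alpha * Rpower (- x) (- alpha - 1)) (-1)).
  - apply is_derive_Reals. apply derivable_pt_lim_power. lra.
  - auto_derive; auto.
  - simpl. unfold scal; simpl. unfold mult; simpl. unfold Rminus. rewrite Rpower_plus, Rpower_m1' by lra. ring.
Qed.

Lemma Psi_cont x : x < 0 -> continuity_pt (fun x => Rpower (- x) (- alpha)) x.
Proof.
  intros Hx. apply (proj2 (continuity_pt_filterlim _ _)).
  apply (ex_derive_continuous (fun x => Rpower (- x) (- alpha)) x). eexists; apply Psi_deriv; auto.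
Qed.

Section Uniq.
Variables (MCS B1 : R).
Hypotheses (HM : forall q, QN q -> Rabs (CSq q) <= MCS)
  (HB1 : forall q, QN q -> Rabs (Gf (fun _ => 1) q) <= B1)
  (HQ : exists q0, QN q0).
Variable w : R -> list Z -> R.
Hypothesis Hw : is_solution N qbar T A k sigma c varpi eta gamma w.

Lemma w_cont q : QN q -> forall t, 0 <= t <= T -> cont_within (fun s => w s q) 0 T t.
Proof.
  intros Hq t Ht. destruct (Hw q Hq) as [[dv Hdv] [HcT _]].
  destruct (Req_dec t T) as [->|]; auto. eapply deriv_cont. apply Hdv; lra.
Qed.

Lemma w_neg q : QN q -> forall t, 0 <= t <= T -> w t q < 0.
Proof.
  intros Hq. destruct (Hw q Hq) as [[dv Hdv] [HcT HT1]].
  assert (Hcont := w_cont q Hq).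
  destruct (act 1 q) as [|j1 l1] eqn:E1; [destruct (act (-1) q) as [|j2 l2] eqn:E2|].
  -
    intros t Ht. set (a := CSq q).
    assert (Hd : forall x, 0 < x < T -> is_derive (fun s => exp (a * s) * w s q) x 0).
    { intros x Hx. destruct (Hdv x ltac:(lra)) as [D [_ [_ Eq]]].
      unfold jterm in Eq. fold (act 1 q) in Eq. fold (act (-1) q) in Eq. rewrite E1, E2 in Eq.
      eapply is_derive_eq. apply (is_derive_mult (fun s => exp (a * s)) (fun s => w s q) x (a * exp (a * x)) (dv x)).
      apply is_derive_exp_lin. apply deriv_interior with 0 T; auto. intros; apply Rmult_comm.
      simpl. unfold mult, plus; simpl.
      assert (dv x = - w x q * a) by (unfold a, CSq; lra). rewrite H. ring. }
    assert (Hcw : forall x, 0 <= x <= T -> cont_within (fun s => exp (a * s) * w s q) t T x).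
    { intros x Hx. apply cw_sub with 0 T; try lra. apply cw_mult; try lra. apply cw_of_cpt, exp_lin_cpt. apply Hcont; lra. }
    assert (G1 : exp (a * t) * w t q <= exp (a * T) * w T q).
    { apply (mono_ge (fun s => exp (a * s) * w s q) (fun _ => 0) t T); try lra. intros x Hx; split; [apply Hd; lra| lra].
      apply Hcw; lra. apply Hcw; lra. }
    rewrite HT1 in G1. pose proof (exp_pos (a * T)). pose proof (exp_pos (a * t)).
    destruct (Rlt_or_le (w t q) 0); auto. nra.
  - assert (Hnz : forall t, 0 <= t < T -> w t q <> 0).
    { intros t Ht Hz. destruct (Hdv t Ht) as [_ [_ [W2 _]]]. unfold jterm_welldef in W2.
      fold (act (-1) q) in W2. rewrite E2 in W2. destruct W2 as [_ Hp]. congruence.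
      rewrite Hz in Hp. unfold Rdiv in Hp. rewrite Rmult_0_l in Hp. lra. }
    intros t Ht. destruct (Rlt_or_le (w t q) 0) as [|Hge]; auto. exfalso.
    destruct (Req_dec t T) as [->|HtT]. lra.
    destruct Hge as [Hgt|Heq]; [|apply (Hnz t); lra].
    assert (Hcc : continuity (fun x => - w (cl 0 T x) q)).
    { intros x. apply continuity_pt_opp. apply (cont_ext (fun s => w s q) 0 T); [lra| auto]. }
    destruct (IVT _ t T Hcc) as [z [Hz1 Hz2]]. lra.
    rewrite cl_id by lra. lra. rewrite cl_id by lra. lra.
    rewrite cl_id in Hz2 by lra. destruct (Req_dec z T) as [->|]. lra. apply (Hnz z); lra.
  - assert (Hnz : forall t, 0 <= t < T -> w t q <> 0).
    { intros t Ht Hz. destruct (Hdv t Ht) as [_ [W1 _]]. unfold jterm_welldef in W1.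
      fold (act 1 q) in W1. rewrite E1 in W1. destruct W1 as [_ Hp]. congruence.
      rewrite Hz in Hp. unfold Rdiv in Hp. rewrite Rmult_0_l in Hp. lra. }
    intros t Ht. destruct (Rlt_or_le (w t q) 0) as [|Hge]; auto. exfalso.
    destruct (Req_dec t T) as [->|HtT]. lra.
    destruct Hge as [Hgt|Heq]; [|apply (Hnz t); lra].
    assert (Hcc : continuity (fun x => - w (cl 0 T x) q)).
    { intros x. apply continuity_pt_opp. apply (cont_ext (fun s => w s q) 0 T); [lra| auto]. }
    destruct (IVT _ t T Hcc) as [z [Hz1 Hz2]]. lra.
    rewrite cl_id by lra. lra. rewrite cl_id by lra. lra.
    rewrite cl_id in Hz2 by lra. destruct (Req_dec z T) as [->|]. lra. apply (Hnz z); lra.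
Qed.

Definition zw s q := Rpower (- w (T - s) q) (- alpha).

Lemma zw_inv s q : QN q -> 0 <= s <= T -> w (T - s) q = - Rpower (zw s q) (- pp).
Proof.
  intros Hq Hss. unfold zw. rewrite Rpower_mult. unfold pp.
  replace (- alpha * - / alpha) with 1 by (field; pose proof alpha_pos; lra).
  rewrite Rpower_1. ring. pose proof (w_neg q Hq (T - s) ltac:(lra)). lra.
Qed.

Lemma zw_deriv_raw q s : QN q -> 0 < s < T ->
  is_derive (fun s => zw s q) s (- alpha * CSq q * zw s q + alpha * CC * (Hs 1 q (zw s) + Hs (-1) q (zw s))).
Proof.
  intros Hq Hss. destruct (Hw q Hq) as [[dv Hdv] _].
  set (t := T - s). destruct (Hdv t ltac:(unfold t; lra)) as [Dw [_ [_ Eq]]].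
  assert (Hx : forall q', QN q' -> w t q' = - Rpower (zw s q') (- pp)).
  { intros; apply zw_inv; auto; lra. }
  destruct (jterm_eq w (zw s) t 1 q Hq (or_introl eq_refl) Hx) as [_ J1].
  destruct (jterm_eq w (zw s) t (-1) q Hq (or_intror eq_refl) Hx) as [_ J2].
  rewrite J1, J2 in Eq. fold (CSq q) in Eq. fold CC in Eq.
  pose proof (w_neg q Hq t ltac:(unfold t; lra)) as Hneg.
  assert (Hder : is_derive (fun s => w (T - s) q) s (-1 * dv t)).
  { apply (is_derive_comp (fun s => w s q) (fun s => T - s) s (dv t) (-1)).
    apply deriv_interior with 0 T; auto. unfold t; lra. auto_derive; auto. }
  eapply is_derive_eq.
  apply (is_derive_comp (fun x => Rpower (- x) (- alpha)) (fun s => w (T - s) q) s _ _ (Psi_deriv _ Hneg) Hder).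
  simpl. unfold scal; simpl. unfold mult; simpl. fold t.
  assert (HY : 0 < zw s q) by apply Rpower_pos.
  rewrite Rpower_m1 in Eq by auto.
  change (Rpower (- w t q) (- alpha)) with (zw s q).
  assert (Hdv' : dv t = - w t q * CSq q + w t q * CC * (/ zw s q * Hs 1 q (zw s) + / zw s q * Hs (-1) q (zw s))) by lra.
  rewrite Hdv'. field. split; lra.
Qed.

Lemma zw_cont q x : QN q -> 0 <= x <= T -> cont_within (fun s => zw s q) 0 T x.
Proof.
  intros Hq Hx. unfold zw.
  apply (cw_comp (fun s => w (T - s) q) (fun x => Rpower (- x) (- alpha))); try lra.
  apply (cw_reparam (fun s => w s q)); try lra. apply w_cont; auto; lra.
  apply Psi_cont. apply w_neg; auto; lra.
Qed.

Lemma zw_0 q : QN q -> zw 0 q = 1.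
Proof.
  intros Hq. destruct (Hw q Hq) as [_ [_ HT1]]. unfold zw. rewrite Rminus_0_r, HT1.
  replace (- -1) with 1 by ring. apply Rpower_one.
Qed.

Lemma zw_lb q s : QN q -> 0 <= s <= T -> 2 * epsq q <= zw s q.
Proof.
  intros Hq Hss. apply (lower_bound q (fun s => zw s q)
    (fun s => - alpha * CSq q * zw s q + alpha * CC * (Hs 1 q (zw s) + Hs (-1) q (zw s)))); auto.
  - apply zw_0; auto.
  - intros x Hx. split. apply zw_deriv_raw; auto.
    pose proof alpha_pos. pose proof CC_nonneg.
    pose proof (Hs_nonneg 1 q (zw x)). pose proof (Hs_nonneg (-1) q (zw x)).
    assert (0 <= alpha * CC * (Hs 1 q (zw x) + Hs (-1) q (zw x))).
    { apply Rmult_le_pos; [apply Rmult_le_pos|]; lra. }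
    lra.
  - intros; apply zw_cont; auto.
Qed.

Lemma zw_deriv q s : QN q -> 0 < s < T -> is_derive (fun s => zw s q) s (Gf (zw s) q).
Proof.
  intros Hq Hss. eapply is_derive_eq. apply zw_deriv_raw; auto.
  unfold Gf. assert (HE : forall q', QN q' -> zw s q' = clampS (zw s) q').
  { intros q' Hq'. unfold clampS. symmetry. apply Rmax_right. pose proof (zw_lb q' s Hq' ltac:(lra)). pose proof (epsq_pos q'). lra. }
  rewrite (Hs_ext 1 q (zw s) (clampS (zw s))), (Hs_ext (-1) q (zw s) (clampS (zw s))); auto.
Qed.

Lemma zw_bound : exists K0, forall q, QN q -> forall s, 0 <= s <= T -> Rabs (zw s q - zl s q) <= K0.
Proof.
  apply (fin_bound N qbar (fun q M => forall s, 0 <= s <= T -> Rabs (zw s q - zl s q) <= M)).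
  { intros q M M' H1 H2 s Hs. eapply Rle_trans; [apply H1; auto| auto]. }
  intros q Hq.
  destruct (continuity_ab_min (fun x => - w (cl 0 T x) q) 0 T ltac:(lra)) as [mx [Hmx Hmx']].
  { intros x _. apply continuity_pt_opp. apply (cont_ext (fun s => w s q) 0 T); [lra|]. apply w_cont; auto. }
  set (m := - w mx q).
  assert (Hm : 0 < m). { unfold m. pose proof (w_neg q Hq mx Hmx'). lra. }
  exists (Rpower m (- alpha) + (1 + RR MCS B1)).
  intros s Hs. pose proof (zl_R MCS B1 HM HB1 HQ q s Hq Hs).
  pose proof (zl_pos MCS B1 HM HB1 HQ q s Hq Hs).
  assert (Hzw : zw s q <= Rpower m (- alpha)).
  { unfold zw. apply Rpower_le_neg. left; apply alpha_pos. split. auto.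
    specialize (Hmx (T - s) ltac:(lra)). rewrite !cl_id in Hmx by lra. unfold m. lra. }
  pose proof (Rpower_pos (- w (T - s) q) (- alpha)). fold (zw s q) in H1.
  unfold Rabs in *; repeat destruct Rcase_abs; lra.
Qed.

Lemma w_eq_vsol t q : 0 <= t <= T -> QN q -> w t q = vsol t q.
Proof.
  intros Ht Hq.
  destruct zw_bound as [K0 HK0].
  assert (HK0p : 0 <= K0). { eapply Rle_trans. apply Rabs_pos. apply (HK0 q Hq 0); lra. }
  pose proof (LL_nonneg MCS HM HQ) as HL.
  assert (Hind : forall n, forall q, QN q -> forall s, 0 <= s <= T ->
     Rabs (zw s q - zl s q) <= K0 * (/2)^n * exp (2 * LL MCS * s)).
  { induction n as [|n IH]; intros q0 Hq0 s Hs.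
    - simpl pow. rewrite Rmult_1_r. eapply Rle_trans. apply HK0; auto.
      rewrite <- (Rmult_1_r K0) at 1. apply Rmult_le_compat_l; auto.
      assert (0 <= 2 * LL MCS * s) by nra. destruct H. left. rewrite <- exp_0. apply exp_increasing; auto.
      rewrite <- H, exp_0; lra.
    - pose proof (bielecki (fun s => zw s q0 - zl s q0) (fun s => Gf (zw s) q0 - Gf (zl s) q0)
        T (LL MCS) (K0 * (/2)^n) HT HL) as HB.
      eapply Rle_trans. apply HB; auto.
      + pose proof (half_pow_pos n); nra.
      + rewrite zw_0, (zl_0 MCS B1 HM HB1 HQ); auto; ring.
      + intros x Hx. split.
        * apply (is_derive_minus (fun s => zw s q0) (fun s => zl s q0)). apply zw_deriv; auto.
          apply deriv_interior with 0 T; auto. apply (zl_deriv MCS B1 HM HB1 HQ); auto; lra.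
        * rewrite Rmult_assoc. apply (Gf_lip MCS); auto.
          pose proof (half_pow_pos n); pose proof (exp_pos (2 * LL MCS * x)).
          apply Rmult_le_pos; [nra| lra].
          intros q' Hq'. apply IH; auto; lra.
      + intros x Hx. apply cw_minus; try lra. apply zw_cont; auto.
        eapply deriv_cont. apply (zl_deriv MCS B1 HM HB1 HQ); auto.
      + simpl pow. right; field. }
  assert (Heq : zw (T - t) q = zl (T - t) q).
  { assert (Rabs (zw (T - t) q - zl (T - t) q) <= 0).
    { apply (vanish _ _ (K0 * exp (2 * LL MCS * (T - t)))).
      pose proof (exp_pos (2 * LL MCS * (T - t))); nra.
      intros n. rewrite Rplus_0_l. apply Rle_trans with (K0 * (/2)^n * exp (2 * LL MCS * (T - t))). apply Hind; auto; lra. right; ring. }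
    pose proof (Rabs_pos (zw (T - t) q - zl (T - t) q)).
    assert (Rabs (zw (T - t) q - zl (T - t) q) = 0) by lra. apply Rabs_eq_0 in H1. lra. }
  unfold vsol. rewrite <- Heq. rewrite <- zw_inv; auto; [|lra]. f_equal. ring.
Qed.

End Uniq.
End Model.

Theorem lemma4p2 (N qbar : nat) (T A k sigma c varpi eta : R) (gamma : nat -> R)
  (HN : (1 <= N)%nat) (HT : 0 < T) (HA : 0 < A) (Hk : 0 < k) (Hsigma : 0 < sigma)
  (Hc : 0 < c) (Hvarpi : 0 < varpi) (Heta : 0 < eta)
  (Hgamma : forall i, (i < N)%nat -> 0 < gamma i) :
  exists v : R -> list Z -> R,
    is_solution N qbar T A k sigma c varpi eta gamma v /\
    bounded_on N qbar T v /\
    (forall w : R -> list Z -> R,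
        is_solution N qbar T A k sigma c varpi eta gamma w ->
        bounded_on N qbar T w ->
        forall t q, 0 <= t <= T -> inQN N qbar q -> w t q = v t q) /\
    (forall t q, 0 <= t <= T -> inQN N qbar q -> v t q < 0).
Proof.
  destruct (fin_bound_f N qbar (fun q => Rabs (CSq N sigma eta gamma q))) as [MCS HM].
  destruct (fin_bound_f N qbar (fun q => Rabs (Gf N qbar T A k sigma c varpi eta gamma (fun _ => 1) q))) as [B1 HB1].
  assert (HQ : exists q0, QN N qbar q0).
  { exists (repeat 0%Z N). split. apply repeat_length. intros i Hi. unfold coord. rewrite nth_repeat. lia. }
  exists (vsol N qbar T A k sigma c varpi eta gamma).
  split; [|split; [|split]].
  - apply (vsol_solution N qbar T A k sigma c varpi eta gamma HN HT HA Hk Hsigma Hvarpi Heta Hgamma MCS B1 HM HB1 HQ).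
  - apply (vsol_bounded N qbar T A k sigma c varpi eta gamma HN HT HA Hk Hsigma Hvarpi Heta Hgamma MCS B1 HM HB1 HQ).
  - intros w Hw _ t q Ht Hq.
    apply (w_eq_vsol N qbar T A k sigma c varpi eta gamma HN HT HA Hk Hsigma Hvarpi Heta Hgamma MCS B1 HM HB1 HQ w Hw t q Ht Hq).
  - intros t q _ _. apply vsol_neg.
Qed.
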